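(* (1) If $(x_0,y_0)\in W_+$ then $A_L^1(\tau^L_{W_+^c})\ge u_c$, and if $\bar u_c<\infty$ then $A_U^1(\tau^U_{W_+^c})\ge\bar u_c$ (flows started at $(x_0,y_0)$). (2) Let $B\subset\mathbb R\times\mathbb R_+$ be bounded. For every $\delta>0$ there exists $T_0$ such that for every $(x_0,y_0)\in B\cap W_+$, $\tau^L_{A_{0,\delta}\cup A_1}\le T_0$, and if $\bar u_c<\infty$ also $\tau^U_{A_{0,\delta}\cup A_1}\le T_0$.
   Context: Fix an integer $p\ge3$, $\beta>0$, $\Lambda_p>0$. $\mathcal F_1(u,v)=-pu+\beta v$, $\mathcal F_2^L(u,v)=2p(p-1)-2(p-1)v+2pu(pu-\beta v)-2\beta\Lambda_pv$, $\mathcal F_2^U$ the same with $+2\beta\Lambda_pv$. $A_L(t)$ (resp. $A_U(t)$) solves $\dot A=(\mathcal F_1,\mathcal F_2^L)(A)$ (resp. $(\mathcal F_1,\mathcal F_2^U)(A)$), $A(0)=(x_0,y_0)$; $\tau^L_B=\inf\{t\ge0:A_L(t)\in B\}$, $\tau^U_B$ likewise. $W_\pm=\{(x,y)\in\mathbb R\times\mathbb R_+:\pm\mathcal F_1>0\}$; for starts in $W_\pm$, $\gamma_L(\cdot;(x_0,y_0))$, $\gamma_U(\cdot;(x_0,y_0))$ are the functions of $u$ whose graphs are the trajectories of $A_L$, $A_U$ up to $\tau_{W_\pm^c}$ (for starts on $\{\mathcal F_1=0\}$, up to the first positive time they reach $\{\mathcal F_1=0\}$). $\ell_1(u)=pu/\beta$;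 $f_L(u)=\frac{p(p-1)+p^2u^2}{p-1+p\beta u+\beta\Lambda_p}$, $f_U(u)=\frac{p(p-1)+p^2u^2}{p-1+p\beta u-\beta\Lambda_p}$ on domains where $0\le f<\infty$. $u_c=\beta(1+\frac{\beta\Lambda_p}{p-1})^{-1}$; $\bar u_c=\beta(1-\frac{\beta\Lambda_p}{p-1})^{-1}$ if $\beta\Lambda_p<p-1$, else $\infty$; $z_c=(u_c,f_L(u_c))$, $\bar z_c=(\bar u_c,f_U(\bar u_c))$. $A_0=\{(u,v):v\in[\gamma_L(u;A_U(\tau^U_{W_+^c})),\gamma_U(u;z_c)]\}$ if $\bar u_c<\infty$ (with $A_U$ started at $z_c$), and $A_0=\{(u,v):v\in[f_L(u),\gamma_U(u;z_c)]\}$ otherwise; $A_{0,\delta}=A_0\cup B_{\ell^\infty}(z_c,\delta)\cup B_{\ell^\infty}(\bar z_c,\delta)$ (second ball omitted if $\bar u_c=\infty$); $A_1=\{(u,v)\in\mathbb R\times\mathbb R_+:v\in[f_L(u),\ell_1(u)]\}\setminus A_0$. *)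

(* Defs.v *)
From Stdlib Require Import Reals Lra.
Open Scope R_scope.

Definition F1 (p : nat) (beta : R) (u v : R) : R := - INR p * u + beta * v.

Definition F2L (p : nat) (beta Lam : R) (u v : R) : R :=
  2 * INR p * (INR p - 1) - 2 * (INR p - 1) * v
  + 2 * INR p * u * (INR p * u - beta * v) - 2 * beta * Lam * v.

Definition F2U (p : nat) (beta Lam : R) (u v : R) : R :=
  2 * INR p * (INR p - 1) - 2 * (INR p - 1) * v
  + 2 * INR p * u * (INR p * u - beta * v) + 2 * beta * Lam * v.

Definition FL (p : nat) (beta Lam : R) (u v : R) : R * R :=
  (F1 p beta u v, F2L p beta Lam u v).
Definition FU (p : nat) (beta Lam : R) (u v : R) : R * R :=
  (F1 p beta u v, F2U p beta Lam u v).

(* T = None means T = +oo *)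
Definition in_dom (T : option R) (t : R) : Prop :=
  0 <= t /\ match T with Some b => t < b | None => True end.

Definition is_sol (F : R -> R -> R * R) (z0 : R * R) (T : option R)
  (A : R -> R * R) : Prop :=
  (match T with Some b => 0 < b | None => True end) /\
  A 0 = z0 /\
  (forall t, in_dom T t -> forall eps, 0 < eps -> exists d, 0 < d /\
     forall s, in_dom T s -> Rabs (s - t) < d ->
       Rabs (fst (A s) - fst (A t)) < eps /\ Rabs (snd (A s) - snd (A t)) < eps) /\
  (forall t, 0 < t -> in_dom T t ->
     derivable_pt_lim (fun s => fst (A s)) t (fst (F (fst (A t)) (snd (A t)))) /\
     derivable_pt_lim (fun s => snd (A s)) t (snd (F (fst (A t)) (snd (A t))))).

Definition is_max_sol (F : R -> R -> R * R) (z0 : R * R) (T : option R)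
  (A : R -> R * R) : Prop :=
  is_sol F z0 T A /\
  match T with
  | None => True
  | Some b => forall b', b < b' -> forall A', ~ is_sol F z0 (Some b') A'
  end.

(* greatest lower bound (infimum) of a set of reals; forces nonemptiness *)
Definition is_glb (S : R -> Prop) (m : R) : Prop :=
  (forall x, S x -> m <= x) /\ (forall m', (forall x, S x -> m' <= x) -> m' <= m).

Definition Wplus (p : nat) (beta : R) (z : R * R) : Prop :=
  0 <= snd z /\ F1 p beta (fst z) (snd z) > 0.
Definition Wminus (p : nat) (beta : R) (z : R * R) : Prop :=
  0 <= snd z /\ F1 p beta (fst z) (snd z) < 0.

Definition l1 (p : nat) (beta u : R) : R := INR p * u / beta.

Definition fL_den (p : nat) (beta Lam u : R) : R :=
  INR p - 1 + INR p * beta * u + beta * Lam.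
Definition fU_den (p : nat) (beta Lam u : R) : R :=
  INR p - 1 + INR p * beta * u - beta * Lam.
Definition fL (p : nat) (beta Lam u : R) : R :=
  (INR p * (INR p - 1) + INR p ^ 2 * u ^ 2) / fL_den p beta Lam u.
Definition fU (p : nat) (beta Lam u : R) : R :=
  (INR p * (INR p - 1) + INR p ^ 2 * u ^ 2) / fU_den p beta Lam u.
(* fL u is defined (0 <= fL u < oo) iff fL_den u > 0 *)

Definition uc (p : nat) (beta Lam : R) : R :=
  beta / (1 + beta * Lam / (INR p - 1)).
(* ubar_c < oo  iff  beta*Lam < p-1 ; then: *)
Definition ubarc (p : nat) (beta Lam : R) : R :=
  beta / (1 - beta * Lam / (INR p - 1)).
Definition ubarc_finite (p : nat) (beta Lam : R) : Prop := beta * Lam < INR p - 1.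

Definition zc (p : nat) (beta Lam : R) : R * R :=
  (uc p beta Lam, fL p beta Lam (uc p beta Lam)).
Definition zbarc (p : nat) (beta Lam : R) : R * R :=
  (ubarc p beta Lam, fU p beta Lam (ubarc p beta Lam)).

(* graph of gamma(.; z0): the trajectory of the maximal solution of
   dA = F(A), A(0)=z0, up to the exit time from W_+ / W_- (start in W_+/W_-),
   or up to the first positive time it reaches {F1 = 0} (start on {F1 = 0}).
   gamma_graph ... u v  <->  gamma(u; z0) = v. *)
Definition gamma_graph (p : nat) (beta : R) (F : R -> R -> R * R)
  (z0 : R * R) (u v : R) : Prop :=
  exists T A, is_max_sol F z0 T A /\
  exists t, in_dom T t /\ A t = (u, v) /\
   ((Wplus p beta z0 /\ forall s, 0 <= s < t -> Wplus p beta (A s)) \/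
    (Wminus p beta z0 /\ forall s, 0 <= s < t -> Wminus p beta (A s)) \/
    (F1 p beta (fst z0) (snd z0) = 0 /\
       forall s, 0 < s < t -> F1 p beta (fst (A s)) (snd (A s)) <> 0)).

(* A_U(tau^U_{W_+^c}) with A_U started at z_c: the point where the U-flow
   from z_c first leaves W_+ after time 0 *)
Definition retpt (p : nat) (beta Lam : R) (P : R * R) : Prop :=
  exists T A, is_max_sol (FU p beta Lam) (zc p beta Lam) T A /\
  exists tau, in_dom T tau /\
    is_glb (fun t => in_dom T t /\ 0 < t /\ ~ Wplus p beta (A t)) tau /\
    P = A tau.

Definition A0 (p : nat) (beta Lam : R) (z : R * R) : Prop :=
  (ubarc_finite p beta Lam /\
     exists P, retpt p beta Lam P /\
     exists v1 v2, gamma_graph p beta (FL p beta Lam) P (fst z) v1 /\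
       gamma_graph p beta (FU p beta Lam) (zc p beta Lam) (fst z) v2 /\
       v1 <= snd z <= v2) \/
  (~ ubarc_finite p beta Lam /\
     0 < fL_den p beta Lam (fst z) /\ fL p beta Lam (fst z) <= snd z /\
     exists v2, gamma_graph p beta (FU p beta Lam) (zc p beta Lam) (fst z) v2 /\
       snd z <= v2).

Definition ballinf (c : R * R) (delta : R) (z : R * R) : Prop :=
  Rabs (fst z - fst c) < delta /\ Rabs (snd z - snd c) < delta.

Definition A0delta (p : nat) (beta Lam delta : R) (z : R * R) : Prop :=
  A0 p beta Lam z \/ ballinf (zc p beta Lam) delta z \/
  (ubarc_finite p beta Lam /\ ballinf (zbarc p beta Lam) delta z).

Definition A1 (p : nat) (beta Lam : R) (z : R * R) : Prop :=
  0 <= snd z /\ 0 < fL_den p beta Lam (fst z) /\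
  fL p beta Lam (fst z) <= snd z <= l1 p beta (fst z) /\ ~ A0 p beta Lam z.

Definition target (p : nat) (beta Lam delta : R) (z : R * R) : Prop :=
  A0delta p beta Lam delta z \/ A1 p beta Lam z.

(* Main.v *)
Require Import Defs.
From Stdlib Require Import Reals Lra Lia Classical FunctionalExtensionality.
From Coquelicot Require Import Coquelicot.
Require Import Defs.
Open Scope R_scope.

Record Coefs := mkC { c1 : R; c2 : R; b0 : R; b1 : R; b2 : R; b3 : R; b4 : R }.

Definition nx (cf : Coefs) (h : nat -> R*R) (m : nat) : R * R :=
  ((c1 cf * fst (h m) + c2 cf * snd (h m)) / INR (S m),
   (b0 cf * (if Nat.eqb m 0 then 1 else 0) + b1 cf * fst (h m) + b2 cf * snd (h m)
     + b3 cf * PS_mult (fun i => fst (h i)) (fun i => fst (h i)) m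
     + b4 cf * PS_mult (fun i => fst (h i)) (fun i => snd (h i)) m) / INR (S m)).

Fixpoint hist (cf : Coefs) (u0 v0 : R) (n : nat) : nat -> R * R :=
  match n with
  | O => fun _ => (u0, v0)
  | S m => fun k => if Nat.leb k m then hist cf u0 v0 m k else nx cf (hist cf u0 v0 m) m
  end.

Definition cu cf u0 v0 (n : nat) : R := fst (hist cf u0 v0 n n).
Definition cv cf u0 v0 (n : nat) : R := snd (hist cf u0 v0 n n).

Lemma hist_stable cf u0 v0 : forall m k, (k <= m)%nat -> hist cf u0 v0 m k = hist cf u0 v0 k k.
Proof.
  induction m as [|m IH]; intros k Hk.
  - assert (k = 0%nat) by lia. subst. reflexivity.
  - simpl. destruct (Nat.leb k m) eqn:E.
    + apply Nat.leb_le in E. apply IH. exact E.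
    + apply Nat.leb_gt in E. assert (k = S m) by lia. subst k.
      change (hist cf u0 v0 (S m) (S m)) with (if Nat.leb (S m) m then hist cf u0 v0 m (S m) else nx cf (hist cf u0 v0 m) m).
      rewrite (proj2 (Nat.leb_gt _ _) (Nat.lt_succ_diag_r m)). reflexivity.
Qed.

Lemma PS_mult_hist cf u0 v0 m (f g : R*R -> R) :
  PS_mult (fun i => f (hist cf u0 v0 m i)) (fun i => g (hist cf u0 v0 m i)) m =
  PS_mult (fun i => f (hist cf u0 v0 i i)) (fun i => g (hist cf u0 v0 i i)) m.
Proof.
  unfold PS_mult. apply sum_eq. intros i Hi.
  rewrite (hist_stable cf u0 v0 m i Hi). rewrite (hist_stable cf u0 v0 m (m - i)) by lia.
  reflexivity.
Qed.

Lemma hist_succ cf u0 v0 m : hist cf u0 v0 (S m) (S m) = nx cf (fun i => hist cf u0 v0 i i) m.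
Proof.
  change (hist cf u0 v0 (S m) (S m)) with (if Nat.leb (S m) m then hist cf u0 v0 m (S m) else nx cf (hist cf u0 v0 m) m).
  rewrite (proj2 (Nat.leb_gt _ _) (Nat.lt_succ_diag_r m)).
  unfold nx.
  rewrite (PS_mult_hist cf u0 v0 m fst fst).
  rewrite (PS_mult_hist cf u0 v0 m fst snd). reflexivity.
Qed.

Lemma cu_succ cf u0 v0 m : INR (S m) * cu cf u0 v0 (S m) = c1 cf * cu cf u0 v0 m + c2 cf * cv cf u0 v0 m.
Proof.
  unfold cu, cv. rewrite hist_succ. unfold nx; cbn [fst snd].
  assert (INR (S m) <> 0) by (apply not_0_INR; lia). field. exact H.
Qed.

Lemma cv_succ cf u0 v0 m : INR (S m) * cv cf u0 v0 (S m) =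
  b0 cf * (if Nat.eqb m 0 then 1 else 0) + b1 cf * cu cf u0 v0 m + b2 cf * cv cf u0 v0 m
  + b3 cf * PS_mult (cu cf u0 v0) (cu cf u0 v0) m + b4 cf * PS_mult (cu cf u0 v0) (cv cf u0 v0) m.
Proof.
  unfold cu, cv. rewrite hist_succ. unfold nx; cbn [fst snd].
  assert (INR (S m) <> 0) by (apply not_0_INR; lia). field. exact H.
Qed.

Lemma cu0 cf u0 v0 : cu cf u0 v0 0 = u0. Proof. reflexivity. Qed.
Lemma cv0 cf u0 v0 : cv cf u0 v0 0 = v0. Proof. reflexivity. Qed.

Lemma Rabs5 a b c d e : Rabs (a + b + c + d + e) <= Rabs a + Rabs b + Rabs c + Rabs d + Rabs e.
Proof.
  pose proof (Rabs_triang (a+b+c+d) e). pose proof (Rabs_triang (a+b+c) d).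
  pose proof (Rabs_triang (a+b) c). pose proof (Rabs_triang a b). lra.
Qed.

Definition rho_of (cf : Coefs) (D : R) : R :=
  1 + Rabs (c1 cf) + Rabs (c2 cf) + Rabs (b0 cf) + Rabs (b1 cf) + Rabs (b2 cf)
    + (Rabs (b3 cf) + Rabs (b4 cf)) * D.

Lemma PS_mult_bound (a b : nat -> R) (D r : R) (n : nat) :
  0 <= D -> 0 <= r ->
  (forall k, (k <= n)%nat -> Rabs (a k) <= D * r ^ k /\ Rabs (b k) <= D * r ^ k) ->
  Rabs (PS_mult a b n) <= INR (S n) * (D * D * r ^ n).
Proof.
  intros HD Hr H. unfold PS_mult.
  eapply Rle_trans. apply sum_f_R0_triangle.
  eapply Rle_trans. apply sum_Rle with (Bn := fun _ => D * D * r ^ n).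
  - intros i Hi. rewrite Rabs_mult.
    destruct (H i Hi) as [Ha _]. destruct (H (n - i)%nat ltac:(lia)) as [_ Hb].
    replace (D * D * r ^ n) with ((D * r ^ i) * (D * r ^ (n - i))).
    + apply Rmult_le_compat; try apply Rabs_pos; assumption.
    + assert (E : r ^ n = r ^ i * r ^ (n - i)) by (rewrite <- pow_add; f_equal; lia).
      rewrite E. ring.
  - rewrite sum_cte. lra.
Qed.

Lemma coef_bound cf u0 v0 D : 1 <= D -> Rabs u0 <= D -> Rabs v0 <= D ->
  forall n, Rabs (cu cf u0 v0 n) <= D * rho_of cf D ^ n /\ Rabs (cv cf u0 v0 n) <= D * rho_of cf D ^ n.
Proof.
  intros HD Hu Hv.
  set (r := rho_of cf D).
  assert (Hr1 : 1 <= r).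
  { unfold r, rho_of. pose proof (Rabs_pos (c1 cf)). pose proof (Rabs_pos (c2 cf)).
    pose proof (Rabs_pos (b0 cf)). pose proof (Rabs_pos (b1 cf)). pose proof (Rabs_pos (b2 cf)).
    pose proof (Rabs_pos (b3 cf)). pose proof (Rabs_pos (b4 cf)). nra. }
  assert (Hstrong : forall n k, (k <= n)%nat -> Rabs (cu cf u0 v0 k) <= D * r ^ k /\ Rabs (cv cf u0 v0 k) <= D * r ^ k).
  { induction n as [|n IH]; intros k Hk.
    - assert (k = 0%nat) by lia. subst. simpl. rewrite cu0, cv0. lra.
    - destruct (Nat.le_gt_cases k n) as [Hkn|Hkn]; [apply IH; exact Hkn|].
      assert (k = S n) by lia. subst k.
      assert (HN : 1 <= INR (S n)) by (apply (le_INR 1); lia).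
      assert (Hq : 1 <= r ^ n) by (apply pow_R1_Rle; lra).
      destruct (IH n (le_n n)) as [Hun Hvn].
      pose proof (PS_mult_bound (cu cf u0 v0) (cu cf u0 v0) D r n ltac:(lra) ltac:(lra)
                   (fun k Hk => conj (proj1 (IH k Hk)) (proj1 (IH k Hk)))) as Hm1.
      pose proof (PS_mult_bound (cu cf u0 v0) (cv cf u0 v0) D r n ltac:(lra) ltac:(lra) IH) as Hm2.
      pose proof (cu_succ cf u0 v0 n) as Eu. pose proof (cv_succ cf u0 v0 n) as Ev.
      set (N := INR (S n)) in *. set (q := r ^ n) in *.
      assert (Hrs : r ^ S n = r * q) by reflexivity. rewrite Hrs.
      pose proof (Rabs_pos (c1 cf)). pose proof (Rabs_pos (c2 cf)).
      pose proof (Rabs_pos (b0 cf)). pose proof (Rabs_pos (b1 cf)). pose proof (Rabs_pos (b2 cf)).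
      pose proof (Rabs_pos (b3 cf)). pose proof (Rabs_pos (b4 cf)).
      split.
      + assert (A1 : Rabs (N * cu cf u0 v0 (S n)) <= (Rabs (c1 cf) + Rabs (c2 cf)) * (D * q)).
        { rewrite Eu. eapply Rle_trans. apply Rabs_triang. rewrite !Rabs_mult.
          pose proof (Rabs_pos (cu cf u0 v0 n)). pose proof (Rabs_pos (cv cf u0 v0 n)). nra. }
        rewrite Rabs_mult, (Rabs_right N) in A1 by lra.
        pose proof (Rabs_pos (cu cf u0 v0 (S n))).
        assert (Rabs (cu cf u0 v0 (S n)) <= (Rabs (c1 cf) + Rabs (c2 cf)) * (D * q)) by nra.
        assert (Hc : Rabs (c1 cf) + Rabs (c2 cf) <= r) by (unfold r, rho_of; nra).
        assert (0 <= D * q) by nra.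
        apply Rle_trans with ((Rabs (c1 cf) + Rabs (c2 cf)) * (D * q)); [assumption|].
        apply Rle_trans with (r * (D * q)); [apply Rmult_le_compat_r; assumption| right; ring].
      + set (E0 := (if Nat.eqb n 0 then 1 else 0)) in *.
        assert (HE0 : Rabs E0 <= 1).
        { unfold E0. destruct (Nat.eqb n 0); rewrite ?Rabs_R1, ?Rabs_R0; lra. }
        assert (A1 : Rabs (N * cv cf u0 v0 (S n)) <=
          Rabs (b0 cf) + (Rabs (b1 cf) + Rabs (b2 cf)) * (D * q) + (Rabs (b3 cf) + Rabs (b4 cf)) * (N * (D * D * q))).
        { rewrite Ev. eapply Rle_trans. apply Rabs5. rewrite !Rabs_mult.
          assert (T1 : Rabs (b0 cf) * Rabs E0 <= Rabs (b0 cf)) by nra.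
          assert (T2 : Rabs (b1 cf) * Rabs (cu cf u0 v0 n) <= Rabs (b1 cf) * (D * q))
            by (apply Rmult_le_compat_l; [apply Rabs_pos|exact Hun]).
          assert (T3 : Rabs (b2 cf) * Rabs (cv cf u0 v0 n) <= Rabs (b2 cf) * (D * q))
            by (apply Rmult_le_compat_l; [apply Rabs_pos|exact Hvn]).
          assert (T4 : Rabs (b3 cf) * Rabs (PS_mult (cu cf u0 v0) (cu cf u0 v0) n) <= Rabs (b3 cf) * (N * (D * D * q)))
            by (apply Rmult_le_compat_l; [apply Rabs_pos|exact Hm1]).
          assert (T5 : Rabs (b4 cf) * Rabs (PS_mult (cu cf u0 v0) (cv cf u0 v0) n) <= Rabs (b4 cf) * (N * (D * D * q)))
            by (apply Rmult_le_compat_l; [apply Rabs_pos|exact Hm2]).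
          lra. }
        rewrite Rabs_mult, (Rabs_right N) in A1 by lra.
        pose proof (Rabs_pos (cv cf u0 v0 (S n))).
        set (X := Rabs (cv cf u0 v0 (S n))) in *.
        assert (N * X <= N * (Rabs (b0 cf) + (Rabs (b1 cf) + Rabs (b2 cf)) * (D * q) + (Rabs (b3 cf) + Rabs (b4 cf)) * (D * D * q))).
        { assert (0 <= D * q) by nra.
          assert (Rabs (b0 cf) <= N * Rabs (b0 cf)) by nra.
          assert ((Rabs (b1 cf) + Rabs (b2 cf)) * (D * q) <= N * ((Rabs (b1 cf) + Rabs (b2 cf)) * (D * q))).
          { assert (0 <= (Rabs (b1 cf) + Rabs (b2 cf)) * (D * q)) by nra. nra. }
          lra. }
        assert (X <= Rabs (b0 cf) + (Rabs (b1 cf) + Rabs (b2 cf)) * (D * q) + (Rabs (b3 cf) + Rabs (b4 cf)) * (D * D * q)).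
        { apply (Rmult_le_reg_l N); lra. }
        assert (Rabs (b0 cf) <= Rabs (b0 cf) * (D * q)).
        { assert (1 <= D * q) by (apply Rle_trans with (1*1); [lra|apply Rmult_le_compat; lra]).
          rewrite <- (Rmult_1_r (Rabs (b0 cf))) at 1. apply Rmult_le_compat_l; [apply Rabs_pos|lra]. }
        assert (Hc : Rabs (b0 cf) + Rabs (b1 cf) + Rabs (b2 cf) + (Rabs (b3 cf) + Rabs (b4 cf)) * D <= r) by (unfold r, rho_of; nra).
        assert (0 <= D * q) by nra.
        apply Rle_trans with ((Rabs (b0 cf) + Rabs (b1 cf) + Rabs (b2 cf) + (Rabs (b3 cf) + Rabs (b4 cf)) * D) * (D * q)).
        { replace ((Rabs (b0 cf) + Rabs (b1 cf) + Rabs (b2 cf) + (Rabs (b3 cf) + Rabs (b4 cf)) * D) * (D * q))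
            with (Rabs (b0 cf) * (D * q) + (Rabs (b1 cf) + Rabs (b2 cf)) * (D * q) + (Rabs (b3 cf) + Rabs (b4 cf)) * (D * D * q)) by ring.
          lra. }
        apply Rle_trans with (r * (D * q)); [apply Rmult_le_compat_r; assumption| right; ring]. }
  intro n. apply (Hstrong n n (le_n n)).
Qed.

Lemma radius_ge (a : nat -> R) (D r : R) : 0 < r -> (forall n, Rabs (a n) <= D * r ^ n) ->
  Rbar_le (Finite (/ r)) (CV_radius a).
Proof.
  intros Hr H. destruct (CV_radius_bounded a) as [Hub _]. apply Hub.
  exists D. intro n. rewrite Rabs_mult.
  rewrite (Rabs_right ((/ r) ^ n)) by (left; apply pow_lt; apply Rinv_0_lt_compat; lra).
  rewrite pow_inv. specialize (H n).
  assert (0 < r ^ n) by (apply pow_lt; lra).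
  apply Rle_trans with (D * r ^ n * / r ^ n).
  - apply Rmult_le_compat_r; [left; apply Rinv_0_lt_compat; lra| exact H].
  - right. field. lra.
Qed.

Lemma in_radius (a : nat -> R) (D r x : R) : 0 < r -> (forall n, Rabs (a n) <= D * r ^ n) ->
  Rabs x < / r -> Rbar_lt (Rabs x) (CV_radius a).
Proof.
  intros Hr H Hx. eapply Rbar_lt_le_trans; [|apply (radius_ge a D r Hr H)]. exact Hx.
Qed.

Definition e0 (n : nat) : R := if Nat.eqb n 0 then 1 else 0.

Lemma e0_pseries x : is_pseries e0 x 1.
Proof.
  assert (He : ex_pseries e0 x).
  { apply CV_radius_inside. eapply (in_radius e0 1 (1 / (Rabs x + 1))).
    - pose proof (Rabs_pos x). apply Rdiv_lt_0_compat; lra.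
    - intro n. unfold e0. pose proof (Rabs_pos x).
      assert (0 < 1 / (Rabs x + 1)) by (apply Rdiv_lt_0_compat; lra).
      assert (0 <= (1 / (Rabs x + 1)) ^ n) by (apply pow_le; lra).
      destruct (Nat.eqb n 0) eqn:E.
      + apply Nat.eqb_eq in E. subst. simpl. rewrite Rabs_R1. lra.
      + rewrite Rabs_R0. lra.
    - pose proof (Rabs_pos x). rewrite Rinv_div. unfold Rdiv. lra. }
  pose proof (PSeries_correct _ _ He) as Hc.
  rewrite (PSeries_decr_1 _ _ He) in Hc.
  rewrite (PSeries_ext (PS_decr_1 e0) (fun _ => 0)) in Hc by (intro n; reflexivity).
  rewrite PSeries_const_0 in Hc. unfold e0 at 2 in Hc. simpl in Hc.
  replace (1 + x * 0) with 1 in Hc by ring. exact Hc.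
Qed.

Definition vfield (cf : Coefs) (u v : R) : R * R :=
  (c1 cf * u + c2 cf * v, b0 cf + b1 cf * u + b2 cf * v + b3 cf * (u * u) + b4 cf * (u * v)).

Lemma local_exist (cf : Coefs) (D : R) : 1 <= D ->
  exists h, 0 < h /\ forall u0 v0, Rabs u0 <= D -> Rabs v0 <= D ->
  exists fu fv : R -> R, fu 0 = u0 /\ fv 0 = v0 /\
    forall x, Rabs x < h ->
      derivable_pt_lim fu x (fst (vfield cf (fu x) (fv x))) /\
      derivable_pt_lim fv x (snd (vfield cf (fu x) (fv x))).
Proof.
  intros HD. set (r := rho_of cf D).
  assert (Hr : 1 <= r).
  { unfold r, rho_of. pose proof (Rabs_pos (c1 cf)). pose proof (Rabs_pos (c2 cf)).
    pose proof (Rabs_pos (b0 cf)). pose proof (Rabs_pos (b1 cf)). pose proof (Rabs_pos (b2 cf)).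
    pose proof (Rabs_pos (b3 cf)). pose proof (Rabs_pos (b4 cf)). nra. }
  exists (/ r). split; [apply Rinv_0_lt_compat; lra|].
  intros u0 v0 Hu Hv.
  pose proof (coef_bound cf u0 v0 D HD Hu Hv) as HB. fold r in HB.
  set (a := cu cf u0 v0) in *. set (b := cv cf u0 v0) in *.
  exists (PSeries a), (PSeries b). split; [|split].
  - rewrite PSeries_0. reflexivity.
  - rewrite PSeries_0. reflexivity.
  - intros x Hx.
    assert (Ra : Rbar_lt (Rabs x) (CV_radius a)) by (apply (in_radius a D r); [lra| intro n; apply (HB n)| exact Hx]).
    assert (Rb : Rbar_lt (Rabs x) (CV_radius b)) by (apply (in_radius b D r); [lra| intro n; apply (HB n)| exact Hx]).
    assert (Pa : is_pseries a x (PSeries a x)) by (apply PSeries_correct, CV_radius_inside, Ra).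
    assert (Pb : is_pseries b x (PSeries b x)) by (apply PSeries_correct, CV_radius_inside, Rb).
    split.
    + apply is_derive_Reals.
      replace (fst (vfield cf (PSeries a x) (PSeries b x))) with (PSeries (PS_derive a) x).
      { apply is_derive_PSeries. exact Ra. }
      apply is_pseries_unique. unfold vfield; cbn [fst].
      apply is_pseries_ext with (PS_plus (PS_scal (c1 cf) a) (PS_scal (c2 cf) b)).
      { intro n. unfold PS_derive, a, b. rewrite cu_succ. reflexivity. }
      assert (H1 := is_pseries_scal (c1 cf) a x _ ltac:(unfold mult; simpl; ring) Pa).
      assert (H2 := is_pseries_scal (c2 cf) b x _ ltac:(unfold mult; simpl; ring) Pb).
      exact (is_pseries_plus _ _ _ _ _ H1 H2).
    + apply is_derive_Reals.
      replace (snd (vfield cf (PSeries a x) (PSeries b x))) with (PSeries (PS_derive b) x).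
      { apply is_derive_PSeries. exact Rb. }
      apply is_pseries_unique. unfold vfield; cbn [snd].
      pose proof (is_pseries_mult a a x _ _ Pa Pa Ra Ra) as M1.
      pose proof (is_pseries_mult a b x _ _ Pa Pb Ra Rb) as M2.
      pose proof (e0_pseries x) as Pe.
      replace (b0 cf) with (b0 cf * 1) by ring.
      apply is_pseries_ext with
        (PS_plus (PS_plus (PS_plus (PS_plus (PS_scal (b0 cf) e0) (PS_scal (b1 cf) a)) (PS_scal (b2 cf) b))
           (PS_scal (b3 cf) (PS_mult a a))) (PS_scal (b4 cf) (PS_mult a b))).
      { intro n. unfold PS_derive, a, b. rewrite cv_succ. reflexivity. }
      assert (H0 := is_pseries_scal (b0 cf) e0 x _ ltac:(unfold mult; simpl; ring) Pe).
      assert (H1 := is_pseries_scal (b1 cf) a x _ ltac:(unfold mult; simpl; ring) Pa).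
      assert (H2 := is_pseries_scal (b2 cf) b x _ ltac:(unfold mult; simpl; ring) Pb).
      assert (H3 := is_pseries_scal (b3 cf) _ x _ ltac:(unfold mult; simpl; ring) M1).
      assert (H4 := is_pseries_scal (b4 cf) _ x _ ltac:(unfold mult; simpl; ring) M2).
      exact (is_pseries_plus _ _ _ _ _ (is_pseries_plus _ _ _ _ _ (is_pseries_plus _ _ _ _ _ (is_pseries_plus _ _ _ _ _ H0 H1) H2) H3) H4).
Qed.

Lemma deriv_cont (f : R -> R) x l : derivable_pt_lim f x l ->
  forall eps, 0 < eps -> exists d, 0 < d /\ forall y, Rabs (y - x) < d -> Rabs (f y - f x) < eps.
Proof.
  intros H eps He.
  assert (Hc : continuity_pt f x) by (apply derivable_continuous_pt; exists l; exact H).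
  destruct (Hc eps He) as [d [Hd Hy]]. exists d. split; [exact Hd|].
  intros y Hyx. destruct (Req_dec x y) as [E|E].
  - subst. rewrite Rminus_diag, Rabs_R0. exact He.
  - apply (Hy y). split; [split; [exact I| exact E]| exact Hyx].
Qed.

Lemma deriv_loc (f g : R -> R) x l d : derivable_pt_lim f x l -> 0 < d ->
  (forall y, Rabs (y - x) < d -> g y = f y) -> derivable_pt_lim g x l.
Proof.
  intros H Hd E eps He. destruct (H eps He) as [del Hdel].
  assert (Hm : 0 < Rmin del d) by (apply Rmin_pos; [apply cond_pos|exact Hd]).
  exists (mkposreal _ Hm). intros h Hh Hhd. simpl in Hhd.
  rewrite (E (x + h)), (E x).
  - apply Hdel; [exact Hh|]. apply Rlt_le_trans with (1 := Hhd), Rmin_l.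
  - rewrite Rminus_diag, Rabs_R0. exact Hd.
  - replace (x + h - x) with h by ring. apply Rlt_le_trans with (1 := Hhd), Rmin_r.
Qed.

Lemma deriv_shift (f : R -> R) c x l : derivable_pt_lim f (x - c) l ->
  derivable_pt_lim (fun s => f (s - c)) x l.
Proof.
  intros H eps He. destruct (H eps He) as [del Hdel]. exists del. intros h Hh Hhd.
  replace (x + h - c) with (x - c + h) by ring. apply Hdel; assumption.
Qed.

Lemma deriv_glue (f g : R -> R) x l : derivable_pt_lim f x l -> derivable_pt_lim g x l -> f x = g x ->
  derivable_pt_lim (fun s => if Rle_dec s x then f s else g s) x l.
Proof.
  intros Hf Hg E eps He. destruct (Hf eps He) as [d1 H1]. destruct (Hg eps He) as [d2 H2].
  assert (Hm : 0 < Rmin d1 d2) by (apply Rmin_pos; apply cond_pos).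
  exists (mkposreal _ Hm). intros h Hh Hhd. simpl in Hhd.
  destruct (Rle_dec x x) as [_|n]; [|exfalso; apply n; lra].
  destruct (Rle_dec (x + h) x).
  - apply H1; [exact Hh| apply Rlt_le_trans with (1 := Hhd), Rmin_l].
  - rewrite E. apply H2; [exact Hh| apply Rlt_le_trans with (1 := Hhd), Rmin_r].
Qed.

Lemma ML (f df : R -> R) (a b k : R) : a <= b ->
  (forall x, a <= x <= b -> derivable_pt_lim f x (df x)) ->
  (forall x, a <= x <= b -> k <= df x) -> k * (b - a) <= f b - f a.
Proof.
  intros Hab Hd Hk. destruct (Req_dec a b) as [E|E].
  - subst. lra.
  - assert (Hab' : a < b) by lra.
    destruct (MVT_gen f a b df) as [c [Hc Hm]].
    + intros x Hx. rewrite Rmin_left, Rmax_right in Hx by lra. apply is_derive_Reals, Hd. lra.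
    + intros x Hx. rewrite Rmin_left, Rmax_right in Hx by lra.
      apply derivable_continuous_pt. exists (df x). apply Hd. exact Hx.
    + rewrite Rmin_left, Rmax_right in Hc by lra. rewrite Hm.
      specialize (Hk c Hc). nra.
Qed.

Lemma ML_le (f df : R -> R) (a b k : R) : a <= b ->
  (forall x, a <= x <= b -> derivable_pt_lim f x (df x)) ->
  (forall x, a <= x <= b -> df x <= k) -> f b - f a <= k * (b - a).
Proof.
  intros Hab Hd Hk.
  pose proof (ML (fun x => - f x) (fun x => - df x) a b (- k) Hab) as H.
  assert (H' : - k * (b - a) <= - f b - - f a).
  { apply H. - intros x Hx. apply derivable_pt_lim_opp. apply Hd, Hx.
    - intros x Hx. specialize (Hk x Hx). lra. }
  lra.
Qed.

Definition vfP (cf : Coefs) : R -> R -> R * R := vfield cf.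

Lemma extend (cf : Coefs) (F : R -> R -> R * R) z0 b A D s0 :
  (forall u v, F u v = vfield cf u v) -> 1 <= D -> 0 <= s0 < b ->
  is_sol F z0 (Some b) A ->
  (forall t, s0 <= t < b -> Rabs (fst (A t)) <= D /\ Rabs (snd (A t)) <= D) ->
  exists b' A', b < b' /\ is_sol F z0 (Some b') A'.
Proof.
  intros HF HD Hs0 [Hb [HA0 [Hcont Hder]]] Hbd.
  destruct (local_exist cf D HD) as [h [Hh Hloc]].
  set (t0 := (Rmax s0 (Rmax (b/2) (b - h/2)) + b) / 2).
  assert (Ht0a : s0 <= t0 /\ b / 2 <= t0 /\ b - h/2 < t0 /\ t0 < b).
  { unfold t0. pose proof (Rmax_l s0 (Rmax (b/2) (b - h/2))). pose proof (Rmax_r s0 (Rmax (b/2) (b - h/2))).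
    pose proof (Rmax_l (b/2) (b - h/2)). pose proof (Rmax_r (b/2) (b - h/2)).
    assert (Rmax s0 (Rmax (b/2) (b - h/2)) < b).
    { apply Rmax_lub_lt; [lra|]. apply Rmax_lub_lt; lra. }
    lra. }
  destruct Ht0a as [Hs0t0 [Hb2 [Hbh Ht0b]]].
  assert (Hdom0 : in_dom (Some b) t0) by (split; lra).
  destruct (Hbd t0 ltac:(lra)) as [Hu0 Hv0].
  destruct (Hloc _ _ Hu0 Hv0) as [fu [fv [Efu [Efv Hfd]]]].
  set (A' := fun s => if Rle_dec s t0 then A s else (fu (s - t0), fv (s - t0))).
  exists (t0 + h/2), A'. split; [lra|].
  assert (EA1 : (fun s => fst (A' s)) = (fun s => if Rle_dec s t0 then fst (A s) else fu (s - t0))).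
  { apply functional_extensionality. intro s. unfold A'. destruct (Rle_dec s t0); reflexivity. }
  assert (EA2 : (fun s => snd (A' s)) = (fun s => if Rle_dec s t0 then snd (A s) else fv (s - t0))).
  { apply functional_extensionality. intro s. unfold A'. destruct (Rle_dec s t0); reflexivity. }
  assert (HB1 : forall t, t0 - h < t < t0 + h ->
     derivable_pt_lim (fun s => fu (s - t0)) t (fst (vfield cf (fu (t - t0)) (fv (t - t0))))).
  { intros t Ht. apply deriv_shift. apply Hfd. apply Rabs_def1; lra. }
  assert (HB2 : forall t, t0 - h < t < t0 + h ->
     derivable_pt_lim (fun s => fv (s - t0)) t (snd (vfield cf (fu (t - t0)) (fv (t - t0))))).
  { intros t Ht. apply deriv_shift. apply Hfd. apply Rabs_def1; lra. }
  assert (HAt0 : A t0 = (fu 0, fv 0)).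
  { rewrite Efu, Efv. destruct (A t0); reflexivity. }
  split; [lra|]. split.
  { unfold A'. destruct (Rle_dec 0 t0); [exact HA0| lra]. }
  split.
  -
    intros t [Ht0 Htb] eps He.
    destruct (Rlt_le_dec t t0) as [Hlt|Hge].
    + destruct (Hcont t ltac:(split; lra) eps He) as [d [Hd Hs]].
      exists (Rmin d (t0 - t)). split; [apply Rmin_pos; lra|].
      intros s [Hs0' Hsb] Hst.
      assert (Hst1 : Rabs (s - t) < d) by (apply Rlt_le_trans with (1 := Hst), Rmin_l).
      assert (Hst2 : Rabs (s - t) < t0 - t) by (apply Rlt_le_trans with (1 := Hst), Rmin_r).
      assert (s < t0) by (apply Rabs_def2 in Hst2; lra).
      unfold A'. destruct (Rle_dec s t0); [|lra]. destruct (Rle_dec t t0); [|lra].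
      apply Hs; [split; lra| exact Hst1].
    + assert (Hin : t0 - h < t < t0 + h) by lra.
      destruct (deriv_cont _ _ _ (HB1 t Hin) eps He) as [d1 [Hd1 H1]].
      destruct (deriv_cont _ _ _ (HB2 t Hin) eps He) as [d2 [Hd2 H2]].
      destruct (Hcont t0 Hdom0 eps He) as [d3 [Hd3 H3]].
      destruct (Rle_lt_or_eq_dec _ _ Hge) as [Hgt|Heq].
      * exists (Rmin d1 (Rmin d2 (t - t0))). split; [apply Rmin_pos; [lra| apply Rmin_pos; lra]|].
        intros s [Hs0' Hsb] Hst.
        assert (Hst1 : Rabs (s - t) < d1) by (apply Rlt_le_trans with (1 := Hst), Rmin_l).
        assert (Hst2 : Rabs (s - t) < d2) by (apply Rlt_le_trans with (1 := Hst), Rle_trans with (2 := Rmin_l d2 (t - t0)), Rmin_r).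
        assert (Hst3 : Rabs (s - t) < t - t0) by (apply Rlt_le_trans with (1 := Hst), Rle_trans with (2 := Rmin_r d2 (t - t0)), Rmin_r).
        apply Rabs_def2 in Hst3.
        unfold A'. destruct (Rle_dec t t0); [lra|]. destruct (Rle_dec s t0); [lra|].
        simpl. split; [apply H1| apply H2]; assumption.
      * subst t.
        exists (Rmin d1 (Rmin d2 d3)). split; [apply Rmin_pos; [lra| apply Rmin_pos; lra]|].
        intros s [Hs0' Hsb] Hst.
        assert (Hst1 : Rabs (s - t0) < d1) by (apply Rlt_le_trans with (1 := Hst), Rmin_l).
        assert (Hst2 : Rabs (s - t0) < d2) by (apply Rlt_le_trans with (1 := Hst), Rle_trans with (2 := Rmin_l d2 d3), Rmin_r).
        assert (Hst3 : Rabs (s - t0) < d3) by (apply Rlt_le_trans with (1 := Hst), Rle_trans with (2 := Rmin_r d2 d3), Rmin_r).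
        unfold A'. destruct (Rle_dec t0 t0); [|lra].
        destruct (Rle_dec s t0).
        -- apply H3; [split; lra| exact Hst3].
        -- rewrite HAt0. simpl. replace (t0 - t0) with 0 in H1, H2 by ring.
           split; [apply H1| apply H2]; assumption.
  -
    intros t Htpos [_ Htb].
    rewrite EA1, EA2.
    destruct (Rlt_le_dec t t0) as [Hlt|Hge].
    + assert (Hs : derivable_pt_lim (fun s => fst (A s)) t (fst (F (fst (A t)) (snd (A t)))) /\
                   derivable_pt_lim (fun s => snd (A s)) t (snd (F (fst (A t)) (snd (A t))))).
      { apply Hder; [exact Htpos| split; lra]. }
      assert (EAt : A' t = A t) by (unfold A'; destruct (Rle_dec t t0); [reflexivity| lra]).
      rewrite EAt. destruct Hs as [Hs1 Hs2]. split.
      * apply (deriv_loc _ _ t _ (t0 - t) Hs1); [lra|].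
        intros y Hy. apply Rabs_def2 in Hy. destruct (Rle_dec y t0); [reflexivity| lra].
      * apply (deriv_loc _ _ t _ (t0 - t) Hs2); [lra|].
        intros y Hy. apply Rabs_def2 in Hy. destruct (Rle_dec y t0); [reflexivity| lra].
    + destruct (Rle_lt_or_eq_dec _ _ Hge) as [Hgt|Heq].
      * assert (EAt : A' t = (fu (t - t0), fv (t - t0))) by (unfold A'; destruct (Rle_dec t t0); [lra| reflexivity]).
        rewrite EAt. simpl. rewrite HF. split.
        -- apply (deriv_loc _ _ t _ (t - t0) (HB1 t ltac:(lra))); [lra|].
           intros y Hy. apply Rabs_def2 in Hy. destruct (Rle_dec y t0); [lra| reflexivity].
        -- apply (deriv_loc _ _ t _ (t - t0) (HB2 t ltac:(lra))); [lra|].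
           intros y Hy. apply Rabs_def2 in Hy. destruct (Rle_dec y t0); [lra| reflexivity].
      * subst t.
        assert (EAt : A' t0 = A t0) by (unfold A'; destruct (Rle_dec t0 t0); [reflexivity| lra]).
        rewrite EAt.
        destruct (Hder t0 Htpos Hdom0) as [Hs1 Hs2].
        pose proof (HB1 t0 ltac:(lra)) as G1. pose proof (HB2 t0 ltac:(lra)) as G2.
        replace (t0 - t0) with 0 in G1, G2 by ring.
        assert (Hfu : fst (A t0) = fu 0) by (rewrite HAt0; reflexivity).
        assert (Hfv : snd (A t0) = fv 0) by (rewrite HAt0; reflexivity).
        rewrite <- Hfu, <- Hfv, <- HF in G1, G2.
        split; apply deriv_glue; try assumption.
        -- simpl. replace (t0 - t0) with 0 by ring. exact Hfu.
        -- simpl. replace (t0 - t0) with 0 by ring. exact Hfv.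
Qed.

Lemma no_bounded_max (cf : Coefs) (F : R -> R -> R * R) z0 b A D s0 :
  (forall u v, F u v = vfield cf u v) -> 1 <= D -> 0 <= s0 < b ->
  is_max_sol F z0 (Some b) A ->
  (forall t, s0 <= t < b -> Rabs (fst (A t)) <= D /\ Rabs (snd (A t)) <= D) -> False.
Proof.
  intros HF HD Hs [Hsol Hmax] Hbd.
  destruct (extend cf F z0 b A D s0 HF HD Hs Hsol Hbd) as [b' [A' [Hbb Hs']]].
  exact (Hmax b' Hbb A' Hs').
Qed.

Lemma abs_le_inv x M : Rabs x <= M -> - M <= x <= M.
Proof. unfold Rabs. destruct (Rcase_abs x); intros; lra. Qed.

Lemma abs_le_intro x M : - M <= x <= M -> Rabs x <= M.
Proof. unfold Rabs. destruct (Rcase_abs x); intros; lra. Qed.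

Definition gdot (P beta K c : R) (u g : R) : R :=
  - P * g + 2 * beta * P * K * (c - u) - 2 * beta * (K + P * u) * g.

Lemma mono_u (u g : R -> R) s0 S :
  (forall t, s0 <= t <= S -> derivable_pt_lim u t (g t)) ->
  (forall t, s0 <= t <= S -> 0 < g t) ->
  forall x y, s0 <= x -> x <= y -> y <= S -> u x <= u y.
Proof.
  intros Hd Hg x y Hx Hxy Hy.
  pose proof (ML u g x y 0 Hxy (fun t Ht => Hd t ltac:(lra)) (fun t Ht => Rlt_le _ _ (Hg t ltac:(lra)))).
  lra.
Qed.

Lemma H_deriv (P beta K c : R) (u g : R -> R) t :
  derivable_pt_lim u t (g t) -> derivable_pt_lim g t (gdot P beta K c (u t) (g t)) ->
  derivable_pt_lim (fun s => g s + (P + 2 * beta * K) * u s + beta * P * (u s * u s)) t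
     (2 * beta * P * K * (c - u t)).
Proof.
  intros Hu Hg.
  assert (H := derivable_pt_lim_plus _ _ t _ _
    (derivable_pt_lim_plus _ _ t _ _ Hg (derivable_pt_lim_scal _ (P + 2 * beta * K) t _ Hu))
    (derivable_pt_lim_scal _ (beta * P) t _ (derivable_pt_lim_mult _ _ t _ _ Hu Hu))).
  unfold plus_fct, mult_real_fct, mult_fct in H.
  replace (2 * beta * P * K * (c - u t)) with
    (gdot P beta K c (u t) (g t) + (P + 2 * beta * K) * g t + beta * P * (g t * u t + u t * g t)).
  - exact H.
  - unfold gdot. ring.
Qed.

Lemma g_upper (P beta K c M1 G1 : R) (u g : R -> R) s0 S :
  0 < P -> 0 < beta -> 0 < K -> 0 <= M1 ->
  (forall t, s0 <= t <= S -> derivable_pt_lim u t (g t) /\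
      derivable_pt_lim g t (gdot P beta K c (u t) (g t))) ->
  (forall t, s0 <= t <= S -> 0 < g t) ->
  Rabs (u s0) <= M1 -> g s0 <= G1 ->
  forall t, s0 <= t <= S ->
    g t <= (G1 + (P + 2 * beta * K) * M1 + beta * P * (M1 * M1))
           + 2 * beta * P * K * (c + M1) * (t - s0)
           + (P + 2 * beta * K) * (P + 2 * beta * K) / (4 * beta * P).
Proof.
  intros HP Hb HK HM Hd Hg Hu0 Hg0 t Ht.
  set (L := P + 2 * beta * K).
  set (H := fun s => g s + L * u s + beta * P * (u s * u s)).
  assert (Hmon := mono_u u g s0 S (fun t Ht => proj1 (Hd t Ht)) Hg).
  assert (HH : H t - H s0 <= 2 * beta * P * K * (c + M1) * (t - s0)).
  { apply (ML_le H (fun s => 2 * beta * P * K * (c - u s)) s0 t).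
    - lra.
    - intros x Hx. destruct (Hd x ltac:(lra)) as [H1 H2]. apply H_deriv; assumption.
    - intros x Hx. assert (u s0 <= u x) by (apply Hmon; lra).
      apply abs_le_inv in Hu0. 
      assert (0 < 2 * beta * P * K) by (repeat apply Rmult_lt_0_compat; lra).
      apply Rmult_le_compat_l; lra. }
  assert (HH0 : H s0 <= G1 + L * M1 + beta * P * (M1 * M1)).
  { unfold H. apply abs_le_inv in Hu0.
    assert (0 < L) by (unfold L; nra).
    assert (u s0 * u s0 <= M1 * M1) by nra.
    assert (0 < beta * P) by nra. nra. }
  assert (Hq : g t <= H t + L * L / (4 * beta * P)).
  { unfold H. assert (0 < beta * P) by nra.
    assert (E : L * L / (4 * beta * P) + L * u t + beta * P * (u t * u t) =
                beta * P * (u t + L / (2 * beta * P)) * (u t + L / (2 * beta * P))) by (field; lra).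
    assert (0 <= beta * P * (u t + L / (2 * beta * P)) * (u t + L / (2 * beta * P))).
    { rewrite Rmult_assoc. apply Rmult_le_pos; [lra| apply Rle_0_sqr]. }
    lra. }
  fold L. lra.
Qed.

Lemma phase_contra (P beta K c delta M1 G1 : R) (u g : R -> R) s0 S :
  0 < P -> 0 < beta -> 0 < K -> 0 < c -> 0 < delta -> 0 <= M1 ->
  (forall t, s0 <= t <= S -> derivable_pt_lim u t (g t) /\
      derivable_pt_lim g t (gdot P beta K c (u t) (g t))) ->
  (forall t, s0 <= t <= S -> 0 < g t /\ ~ (Rabs (u t - c) < delta /\ g t < delta)) ->
  Rabs (u s0) <= M1 -> g s0 <= G1 -> s0 <= S ->
  let C := P + 2 * beta * (K + P * c) in
  let a := 2 * beta * P * K * delta in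
  let T1 := (1 + C * (M1 + c)) / a + M1 + c + 1 in
  let Gb2 := (G1 + (P + 2 * beta * K) * M1 + beta * P * (M1 * M1))
           + 2 * beta * P * K * (c + M1) * (T1 + 2)
           + (P + 2 * beta * K) * (P + 2 * beta * K) / (4 * beta * P) in
  s0 + (T1 + 2 + Gb2 / a + 1) <= S -> False.
Proof.
  intros HP Hb HK Hc Hdel HM Hd Hgood Hu0 Hg0 Hs0S C a T1 Gb2 HS.
  assert (Ha : 0 < a) by (unfold a; repeat apply Rmult_lt_0_compat; lra).
  assert (HC : 0 < C).
  { assert (0 < P * c) by (apply Rmult_lt_0_compat; lra).
    assert (0 < beta * (K + P * c)) by (apply Rmult_lt_0_compat; lra). unfold C; lra. }
  assert (Hg : forall t, s0 <= t <= S -> 0 < g t) by (intros t Ht; apply (Hgood t Ht)).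
  assert (Hmon := mono_u u g s0 S (fun t Ht => proj1 (Hd t Ht)) Hg).
  assert (HT1 : 0 < (1 + C * (M1 + c)) / a) by (apply Rdiv_lt_0_compat; nra).
  assert (HGb : 0 < Gb2).
  { pose proof (g_upper P beta K c M1 G1 u g s0 S HP Hb HK HM Hd Hg Hu0 Hg0 s0).
    assert (0 < g s0) by (apply Hg; split; lra).
    assert (g s0 <= Gb2).
    { unfold Gb2. eapply Rle_trans; [apply H; split; lra|].
      assert (0 <= 2 * beta * P * K * (c + M1) * (T1 + 2)).
      { apply Rmult_le_pos; [| unfold T1; lra]. repeat apply Rmult_le_pos; lra. }
      replace (s0 - s0) with 0 by ring. lra. }
    lra. }
  assert (HGa : 0 < Gb2 / a) by (apply Rdiv_lt_0_compat; lra).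
  assert (HT1' : 0 < T1) by (unfold T1; lra).
  set (s1 := s0 + T1). set (s2 := s1 + 2). set (s3 := s2 + Gb2 / a + 1).
  assert (Hs3 : s3 <= S) by (unfold s3, s2, s1; lra).
  apply abs_le_inv in Hu0.
  assert (HA : c - delta < u s1).
  { destruct (Rlt_le_dec (c - delta) (u s1)) as [ok|Hbad]; [exact ok| exfalso].
    assert (Hle : forall x, s0 <= x <= s1 -> u x <= c - delta).
    { intros x Hx. apply Rle_trans with (u s1); [apply Hmon; unfold s3, s2, s1 in *; lra| exact Hbad]. }
    assert (Hpsi : forall x, s0 <= x <= s1 -> a * (x - s0) <= (g x + C * u x) - (g s0 + C * u s0)).
    { intros x Hx.
      apply (ML (fun s => g s + C * u s) (fun s => gdot P beta K c (u s) (g s) + C * g s) s0 x a).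
      - lra.
      - intros y Hy. destruct (Hd y ltac:(unfold s3, s2, s1 in *; lra)) as [H1 H2].
        apply derivable_pt_lim_plus; [exact H2|]. apply derivable_pt_lim_scal. exact H1.
      - intros y Hy. specialize (Hle y ltac:(lra)). assert (Hgy : 0 < g y) by (apply Hg; unfold s3, s2, s1 in *; lra).
        unfold gdot, a, C.
        assert (0 <= 2 * beta * g y * (P * c - P * u y)).
        { apply Rmult_le_pos; [nra| nra]. }
        assert (2 * beta * P * K * delta <= 2 * beta * P * K * (c - u y)).
        { apply Rmult_le_compat_l; [repeat apply Rmult_le_pos; lra| lra]. }
        nra. }
    set (x1 := s0 + (1 + C * (M1 + c)) / a).
    assert (Hx1 : s0 <= x1 <= s1) by (unfold x1, s1, T1; lra).
    assert (Hg1 : forall x, x1 <= x <= s1 -> 1 <= g x).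
    { intros x Hx. specialize (Hpsi x ltac:(lra)). specialize (Hle x ltac:(lra)).
      assert (g s0 > 0) by (apply Hg; unfold s3, s2, s1 in *; lra).
      assert (a * (x - s0) >= 1 + C * (M1 + c)).
      { assert (a * (x1 - s0) = 1 + C * (M1 + c)) by (unfold x1; field; lra).
        assert (a * (x - s0) >= a * (x1 - s0)) by (apply Rle_ge, Rmult_le_compat_l; lra). lra. }
      assert (C * u x <= C * c) by (apply Rmult_le_compat_l; lra).
      assert (C * (- M1) <= C * u s0) by (apply Rmult_le_compat_l; lra).
      nra. }
    assert (Hu1 : 1 * (s1 - x1) <= u s1 - u x1).
    { apply (ML u g x1 s1 1); [lra| |].
      - intros y Hy. apply (Hd y). unfold s3, s2, s1 in *; lra.
      - exact Hg1. }
    assert (u s0 <= u x1) by (apply Hmon; unfold s3, s2, s1 in *; lra).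
    assert (s1 - x1 = M1 + c + 1) by (unfold s1, x1, T1; ring).
    lra. }
  assert (HB : c + delta <= u s2).
  { destruct (Rle_lt_dec (c + delta) (u s2)) as [ok|Hbad]; [exact ok| exfalso].
    assert (Hg2 : forall x, s1 <= x <= s2 -> delta <= g x).
    { intros x Hx. assert (Hx' : s0 <= x <= S) by (unfold s3, s2, s1 in *; lra).
      destruct (Hgood x Hx') as [Hgx Hn].
      assert (u s1 <= u x) by (apply Hmon; unfold s3, s2, s1 in *; lra).
      assert (u x <= u s2) by (apply Hmon; unfold s3, s2, s1 in *; lra).
      destruct (Rlt_le_dec (g x) delta) as [Hl|Hl]; [|exact Hl].
      exfalso. apply Hn. split; [apply Rabs_def1; lra| exact Hl]. }
    assert (Hu2 : delta * (s2 - s1) <= u s2 - u s1).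
    { apply (ML u g s1 s2 delta); [unfold s2; lra| |].
      - intros y Hy. apply (Hd y). unfold s3, s2, s1 in *; lra.
      - exact Hg2. }
    assert (E2 : s2 - s1 = 2) by (unfold s2; ring). rewrite E2 in Hu2. lra. }
  assert (Hgs2 : g s2 <= Gb2).
  { pose proof (g_upper P beta K c M1 G1 u g s0 S HP Hb HK HM Hd Hg ltac:(apply abs_le_intro; lra) Hg0 s2 ltac:(unfold s3, s2, s1 in *; lra)).
    assert (s2 - s0 = T1 + 2) by (unfold s2, s1; ring). rewrite H0 in H. exact H. }
  assert (Hg3 : g s3 - g s2 <= - a * (s3 - s2)).
  { apply (ML_le g (fun s => gdot P beta K c (u s) (g s)) s2 s3 (- a)).
    - unfold s3; lra.
    - intros y Hy. apply (Hd y). unfold s3, s2, s1 in *; lra.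
    - intros y Hy. assert (Hy' : s0 <= y <= S) by (unfold s3, s2, s1 in *; lra).
      assert (u s2 <= u y) by (apply Hmon; unfold s3, s2, s1 in *; lra).
      assert (0 < g y) by (apply Hg; exact Hy').
      unfold gdot, a.
      assert (0 <= 2 * beta * (K + P * u y) * g y).
      { apply Rmult_le_pos; [| lra]. apply Rmult_le_pos; [lra| nra]. }
      assert (2 * beta * P * K * (c - u y) <= 2 * beta * P * K * (- delta)).
      { apply Rmult_le_compat_l; [repeat apply Rmult_le_pos; lra| lra]. }
      nra. }
  assert (s3 - s2 = Gb2 / a + 1) by (unfold s3; ring).
  assert (a * (Gb2 / a + 1) = Gb2 + a) by (field; lra).
  assert (0 < g s3) by (apply Hg; unfold s3, s2, s1 in *; lra).
  nra.
Qed.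

Definition Gf (P beta K : R) (u v : R) : R * R :=
  (- P * u + beta * v, 2 * P * (P - 1) - 2 * K * beta * v + 2 * P ^ 2 * u ^ 2 - 2 * P * beta * u * v).

Definition cfG (P beta K : R) : Coefs :=
  mkC (- P) beta (2 * P * (P - 1)) 0 (- 2 * K * beta) (2 * P ^ 2) (- 2 * P * beta).

Lemma Gf_vf P beta K u v : Gf P beta K u v = vfield (cfG P beta K) u v.
Proof. unfold Gf, vfield, cfG; simpl. f_equal; ring. Qed.

Lemma FL_Gf p beta Lam : beta <> 0 -> FL p beta Lam = Gf (INR p) beta ((INR p - 1) / beta + Lam).
Proof.
  intro Hb. apply functional_extensionality; intro u. apply functional_extensionality; intro v.
  unfold FL, F1, F2L, Gf. f_equal. field. exact Hb.
Qed.

Lemma FU_Gf p beta Lam : beta <> 0 -> FU p beta Lam = Gf (INR p) beta ((INR p - 1) / beta - Lam).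
Proof.
  intro Hb. apply functional_extensionality; intro u. apply functional_extensionality; intro v.
  unfold FU, F1, F2U, Gf. f_equal. field. exact Hb.
Qed.

Lemma sol_derivs (P beta K : R) z0 T A t : K <> 0 ->
  is_sol (Gf P beta K) z0 T A -> 0 < t -> in_dom T t ->
  derivable_pt_lim (fun s => fst (A s)) t (- P * fst (A t) + beta * snd (A t)) /\
  derivable_pt_lim (fun s => - P * fst (A s) + beta * snd (A s)) t
     (gdot P beta K ((P - 1) / K) (fst (A t)) (- P * fst (A t) + beta * snd (A t))) /\
  derivable_pt_lim (fun s => snd (A s)) t (snd (Gf P beta K (fst (A t)) (snd (A t)))).
Proof.
  intros HK [_ [_ [_ Hd]]] Ht Hdom. destruct (Hd t Ht Hdom) as [H1 H2].
  simpl in H1. split; [exact H1|]. split; [|exact H2].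
  assert (H := derivable_pt_lim_plus _ _ t _ _ (derivable_pt_lim_scal _ (- P) t _ H1)
                 (derivable_pt_lim_scal _ beta t _ H2)).
  unfold plus_fct, mult_real_fct in H.
  replace (gdot P beta K ((P - 1) / K) (fst (A t)) (- P * fst (A t) + beta * snd (A t)))
    with (- P * (- P * fst (A t) + beta * snd (A t)) + beta * snd (Gf P beta K (fst (A t)) (snd (A t)))).
  - exact H.
  - unfold gdot, Gf. simpl. field. exact HK.
Qed.

Lemma glb_exists (S : R -> Prop) : (exists t, S t) -> (forall t, S t -> 0 <= t) -> exists m, is_glb S m.
Proof.
  intros [t0 Ht0] Hpos.
  destruct (completeness (fun x => S (- x))) as [m [Hub Hlub]].
  - exists 0. intros x Hx. specialize (Hpos _ Hx). lra.
  - exists (- t0). replace (- - t0) with t0 by ring. exact Ht0.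
  - exists (- m). split.
    + intros x Hx. assert (- x <= m) by (apply Hub; replace (- - x) with x by ring; exact Hx). lra.
    + intros m' Hm'. assert (m <= - m').
      { apply Hlub. intros x Hx. specialize (Hm' _ Hx). lra. }
      lra.
Qed.

Lemma glb_props (S : R -> Prop) m : is_glb S m ->
  (exists t, S t) /\ (forall t, S t -> m <= t).
Proof.
  intros [H1 H2]. split; [|exact H1].
  apply NNPP. intro Hn. assert (m + 1 <= m); [|lra].
  apply H2. intros x Hx. exfalso. apply Hn. exists x. exact Hx.
Qed.

Lemma exit_lemma (P beta K : R) z0 T A tau : 0 < P -> 0 < beta -> 0 < K ->
  is_sol (Gf P beta K) z0 T A -> 0 < tau -> in_dom T tau ->
  - P * fst (A tau) + beta * snd (A tau) = 0 ->
  (forall s, 0 <= s < tau -> 0 < - P * fst (A s) + beta * snd (A s)) ->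
  (P - 1) / K <= fst (A tau).
Proof.
  intros HP Hb HK Hsol Ht Hdom Hg0 Hpos.
  destruct (sol_derivs P beta K z0 T A tau ltac:(lra) Hsol Ht Hdom) as [_ [Hg _]].
  rewrite Hg0 in Hg. unfold gdot in Hg.
  set (l := - P * 0 + 2 * beta * P * K * ((P - 1) / K - fst (A tau)) - 2 * beta * (K + P * fst (A tau)) * 0) in Hg.
  destruct (Rle_lt_dec ((P - 1) / K) (fst (A tau))) as [ok|Hlt]; [exact ok| exfalso].
  assert (Hl : 0 < l).
  { unfold l. assert (0 < 2 * beta * P * K) by (repeat apply Rmult_lt_0_compat; lra).
    assert (0 < 2 * beta * P * K * ((P - 1) / K - fst (A tau))) by (apply Rmult_lt_0_compat; lra). lra. }
  destruct (Hg (l / 2) ltac:(lra)) as [d Hd].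
  set (h := - Rmin (d / 2) (tau / 2)).
  assert (Hh1 : 0 < Rmin (d / 2) (tau / 2)) by (apply Rmin_pos; [pose proof (cond_pos d)|]; lra).
  assert (Hh2 : Rmin (d / 2) (tau / 2) <= d / 2) by apply Rmin_l.
  assert (Hh3 : Rmin (d / 2) (tau / 2) <= tau / 2) by apply Rmin_r.
  pose proof (cond_pos d).
  specialize (Hd h ltac:(unfold h; lra) ltac:(unfold h; rewrite Rabs_Ropp, Rabs_right; lra)).
  rewrite Hg0 in Hd.
  specialize (Hpos (tau + h) ltac:(unfold h; lra)).
  apply Rabs_def2 in Hd. destruct Hd as [Hd1 Hd2].
  set (q := - P * fst (A (tau + h)) + beta * snd (A (tau + h))) in *.
  assert (Hq : (q - 0) / h > l / 2) by lra.
  assert (Hhneg : h < 0) by (unfold h; lra).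
  assert (q * / h < 0).
  { assert (/ h < 0) by (apply Rinv_lt_0_compat; exact Hhneg).
    assert (0 < q) by exact Hpos. nra. }
  unfold Rdiv in Hq. rewrite Rminus_0_r in Hq. lra.
Qed.

Lemma cont3 (F : R -> R -> R * R) z0 T A (P beta : R) t : 0 < P -> 0 < beta ->
  is_sol F z0 T A -> in_dom T t -> forall eps, 0 < eps -> exists d, 0 < d /\
  forall s, in_dom T s -> Rabs (s - t) < d ->
    Rabs (fst (A s) - fst (A t)) < eps /\ Rabs (snd (A s) - snd (A t)) < eps /\
    Rabs ((- P * fst (A s) + beta * snd (A s)) - (- P * fst (A t) + beta * snd (A t))) < eps.
Proof.
  intros HP Hb [_ [_ [Hc _]]] Ht eps He.
  set (e := eps / (1 + P + beta)).
  assert (He' : 0 < e) by (unfold e; apply Rdiv_lt_0_compat; lra).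
  assert (Hee : e <= eps).
  { unfold e. apply Rle_trans with (eps / 1); [| right; field].
    apply Rmult_le_compat_l; [lra|]. apply Rinv_le_contravar; lra. }
  destruct (Hc t Ht e He') as [d [Hd Hs]]. exists d. split; [exact Hd|].
  intros s Hs' Hst. destruct (Hs s Hs' Hst) as [H1 H2].
  split; [lra|]. split; [lra|].
  replace ((- P * fst (A s) + beta * snd (A s)) - (- P * fst (A t) + beta * snd (A t)))
    with (- P * (fst (A s) - fst (A t)) + beta * (snd (A s) - snd (A t))) by ring.
  eapply Rle_lt_trans. apply Rabs_triang. rewrite !Rabs_mult, Rabs_Ropp, (Rabs_right P), (Rabs_right beta) by lra.
  assert (P * Rabs (fst (A s) - fst (A t)) <= P * e) by (apply Rmult_le_compat_l; lra).
  assert (beta * Rabs (snd (A s) - snd (A t)) <= beta * e) by (apply Rmult_le_compat_l; lra).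
  assert ((P + beta) * e < eps).
  { unfold e. apply Rlt_le_trans with ((1 + P + beta) * (eps / (1 + P + beta))).
    - apply Rmult_lt_compat_r; [exact He'| lra].
    - right; field; lra. }
  lra.
Qed.

Definition goodz (P beta c dl : R) (z : R * R) : Prop :=
  0 < - P * fst z + beta * snd z /\
  ~ (Rabs (fst z - c) < dl /\ - P * fst z + beta * snd z < dl).

Lemma P2gen (p : nat) (beta K delta M : R) : (3 <= p)%nat -> 0 < beta -> 0 < K -> 0 < delta -> 0 <= M ->
  exists T0, forall z0, Rabs (fst z0) <= M -> Rabs (snd z0) <= M -> Wplus p beta z0 ->
   forall T A, is_max_sol (Gf (INR p) beta K) z0 T A ->
   exists t, in_dom T t /\ t <= T0 /\
     ((- INR p * fst (A t) + beta * snd (A t) = 0 /\ (INR p - 1) / K <= fst (A t)) \/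
      (Rabs (fst (A t) - (INR p - 1) / K) < delta /\
       Rabs (snd (A t) - INR p * ((INR p - 1) / K) / beta) < delta)).
Proof.
  intros Hp Hb HK Hdel HM.
  set (P := INR p). assert (HP : 3 <= P) by (unfold P; replace 3 with (INR 3) by (simpl; ring); apply le_INR; exact Hp).
  set (c := (P - 1) / K). assert (Hc : 0 < c) by (unfold c; apply Rdiv_lt_0_compat; lra).
  set (dl := Rmin (delta / 2) (delta * beta / (2 * (P + 1)))).
  assert (Hdl : 0 < dl) by (unfold dl; apply Rmin_pos; [lra| apply Rdiv_lt_0_compat; nra]).
  assert (Hdl1 : dl <= delta / 2) by apply Rmin_l.
  assert (Hdl2 : dl <= delta * beta / (2 * (P + 1))) by apply Rmin_r.
  set (M1 := M + 1). set (G1 := (P + beta) * M1).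
  set (C := P + 2 * beta * (K + P * c)).
  set (a := 2 * beta * P * K * dl).
  set (T1 := (1 + C * (M1 + c)) / a + M1 + c + 1).
  set (Gb2 := (G1 + (P + 2 * beta * K) * M1 + beta * P * (M1 * M1))
           + 2 * beta * P * K * (c + M1) * (T1 + 2)
           + (P + 2 * beta * K) * (P + 2 * beta * K) / (4 * beta * P)).
  set (Tend := T1 + 2 + Gb2 / a + 1).
  assert (Ha : 0 < a) by (unfold a; repeat apply Rmult_lt_0_compat; lra).
  assert (HC : 0 < C).
  { assert (0 < P * c) by (apply Rmult_lt_0_compat; lra).
    assert (0 < beta * (K + P * c)) by (apply Rmult_lt_0_compat; lra). unfold C; lra. }
  assert (HT1 : 0 < T1).
  { unfold T1. assert (0 < C * (M1 + c)) by (apply Rmult_lt_0_compat; unfold M1; lra).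
    assert (0 < (1 + C * (M1 + c)) / a) by (apply Rdiv_lt_0_compat; lra). unfold M1 in *; lra. }
  assert (HGb : 0 < Gb2).
  { unfold Gb2, G1, M1.
    assert (0 <= (P + 2 * beta * K) * (M + 1)) by (apply Rmult_le_pos; nra).
    assert (0 <= beta * P * ((M + 1) * (M + 1))) by (apply Rmult_le_pos; nra).
    assert (0 <= 2 * beta * P * K * (c + (M + 1)) * (T1 + 2)).
    { apply Rmult_le_pos; [|lra]. apply Rmult_le_pos; [|lra]. repeat apply Rmult_le_pos; lra. }
    assert (0 <= (P + 2 * beta * K) * (P + 2 * beta * K) / (4 * beta * P)).
    { apply Rmult_le_pos; [apply Rle_0_sqr|]. left; apply Rinv_0_lt_compat; nra. }
    assert (0 < (P + beta) * (M + 1)) by (apply Rmult_lt_0_compat; lra). lra. }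
  assert (HTend : 0 < Tend) by (unfold Tend; assert (0 < Gb2 / a) by (apply Rdiv_lt_0_compat; lra); lra).
  set (L := P + 2 * beta * K).
  set (Gx := (G1 + L * M1 + beta * P * (M1 * M1)) + 2 * beta * P * K * (c + M1) * Tend + L * L / (4 * beta * P)).
  assert (HGx : 0 <= Gx).
  { unfold Gx, G1, L, M1.
    assert (0 <= (P + 2 * beta * K) * (M + 1)) by (apply Rmult_le_pos; nra).
    assert (0 <= beta * P * ((M + 1) * (M + 1))) by (apply Rmult_le_pos; nra).
    assert (0 <= 2 * beta * P * K * (c + (M + 1)) * Tend).
    { apply Rmult_le_pos; [|lra]. apply Rmult_le_pos; [|lra]. repeat apply Rmult_le_pos; lra. }
    assert (0 <= (P + 2 * beta * K) * (P + 2 * beta * K) / (4 * beta * P)).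
    { apply Rmult_le_pos; [apply Rle_0_sqr|]. left; apply Rinv_0_lt_compat; nra. }
    assert (0 < (P + beta) * (M + 1)) by (apply Rmult_lt_0_compat; lra). lra. }
  set (Dx := 1 + (M1 + Gx * Tend) + (Gx + P * (M1 + Gx * Tend)) / beta).
  exists (1 + Tend).
  intros z0 Hu0 Hv0 HW T A Hmax.
  pose proof Hmax as [Hsol _].
  assert (HA0 : A 0 = z0) by apply Hsol.
  assert (Hdom0 : in_dom T 0).
  { split; [lra|]. destruct T as [b|]; [apply Hsol| exact I]. }
  set (u := fun s => fst (A s)). set (g := fun s => - P * fst (A s) + beta * snd (A s)).
  assert (Hg0 : 0 < g 0).
  { unfold g. rewrite HA0. destruct HW as [_ HW]. unfold F1 in HW. fold P in HW. lra. }
  destruct (classic (exists t1, in_dom T t1 /\ t1 <= 1 + Tend /\ ~ goodz P beta c dl (A t1))) as [[t1 [Ht1d [Ht1T Ht1b]]]|Hno].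
  -
    set (Sb := fun t => in_dom T t /\ ~ goodz P beta c dl (A t)).
    destruct (glb_exists Sb ltac:(exists t1; split; assumption) ltac:(intros t [[Ht _] _]; exact Ht)) as [tau Htau].
    destruct Htau as [Hlb Hglb].
    assert (Htau0 : 0 <= tau) by (apply Hglb; intros t [[Ht _] _]; exact Ht).
    assert (Htau1 : tau <= t1) by (apply Hlb; split; assumption).
    assert (Hdomt : in_dom T tau).
    { split; [exact Htau0|]. destruct T as [b|]; [destruct Ht1d; lra| exact I]. }
    assert (Hbefore : forall s, 0 <= s < tau -> in_dom T s /\ goodz P beta c dl (A s)).
    { intros s Hs. assert (Hsd : in_dom T s).
      { split; [lra|]. destruct T as [b|]; [destruct Hdomt; lra| exact I]. }
      split; [exact Hsd|]. apply NNPP. intro Hn. assert (tau <= s) by (apply Hlb; split; assumption). lra. }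
    assert (Hgnn : 0 <= g tau).
    { destruct (Rle_lt_dec 0 (g tau)) as [ok|Hneg]; [exact ok| exfalso].
      destruct (Req_dec tau 0) as [E|E].
      - rewrite E in Hneg. lra.
      - destruct (cont3 _ z0 T A P beta tau ltac:(lra) Hb Hsol Hdomt (- g tau) ltac:(lra)) as [d [Hd Hs]].
        set (s := Rmax 0 (tau - d / 2)).
        assert (Hs1 : 0 <= s) by apply Rmax_l.
        assert (Hs2 : tau - d / 2 <= s) by apply Rmax_r.
        assert (Hs3 : s < tau) by (unfold s; apply Rmax_lub_lt; lra).
        destruct (Hbefore s ltac:(lra)) as [Hsd [Hgs _]].
        destruct (Hs s Hsd ltac:(apply Rabs_def1; lra)) as [_ [_ H3]].
        apply Rabs_def2 in H3. unfold g in *. lra. }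
    assert (Hcase : g tau <= 0 \/ (Rabs (u tau - c) <= dl /\ g tau <= dl)).
    { apply NNPP. intro Hn.
      assert (Hgp : 0 < g tau) by (destruct (Rle_lt_dec (g tau) 0); [exfalso; apply Hn; left; assumption| assumption]).
      assert (Hor : dl < Rabs (u tau - c) \/ dl < g tau).
      { destruct (Rlt_le_dec dl (Rabs (u tau - c))); [left; assumption|].
        destruct (Rlt_le_dec dl (g tau)); [right; assumption|]. exfalso. apply Hn. right. split; assumption. }
      set (eps := Rmin (g tau) (Rmax (Rabs (u tau - c) - dl) (g tau - dl))).
      assert (Heps : 0 < eps).
      { unfold eps. apply Rmin_pos; [exact Hgp|].
        destruct Hor; [apply Rlt_le_trans with (2 := Rmax_l _ _)| apply Rlt_le_trans with (2 := Rmax_r _ _)]; lra. }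
      destruct (cont3 _ z0 T A P beta tau ltac:(lra) Hb Hsol Hdomt eps Heps) as [d [Hd Hs]].
      assert (Hgood : forall s, in_dom T s -> Rabs (s - tau) < d -> goodz P beta c dl (A s)).
      { intros s Hsd Hst. destruct (Hs s Hsd Hst) as [H1 [_ H3]].
        assert (He1 : eps <= g tau) by apply Rmin_l.
        assert (He2 : eps <= Rmax (Rabs (u tau - c) - dl) (g tau - dl)) by apply Rmin_r.
        apply Rabs_def2 in H3. fold (g s) in H3. fold (g tau) in H3.
        split; [unfold g in *; lra|].
        intros [Hu Hgl]. fold (g s) in Hgl.
        pose proof (Rabs_triang_inv (u tau - c) (u tau - fst (A s))) as Tr.
        replace (u tau - c - (u tau - fst (A s))) with (fst (A s) - c) in Tr by ring.
        rewrite Rabs_minus_sym in H1. fold (u tau) in H1.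
        destruct (Rle_lt_dec (Rabs (u tau - c) - dl) (g tau - dl)) as [Hm|Hm].
        + rewrite Rmax_right in He2 by lra. unfold g, u in *. destruct Hor; lra.
        + rewrite Rmax_left in He2 by lra. unfold g, u in *. destruct Hor; lra. }
      assert (tau + d <= tau); [|lra].
      apply Hglb. intros t [Htd Htb].
      destruct (Rlt_le_dec t (tau + d)) as [Hl|Hl]; [|exact Hl].
      exfalso. apply Htb. apply Hgood; [exact Htd|]. assert (tau <= t) by (apply Hlb; split; assumption).
      apply Rabs_def1; lra. }
    exists tau. split; [exact Hdomt|]. split; [lra|].
    destruct Hcase as [Hle|[Hu Hgl]].
    + left. assert (Hgz : g tau = 0) by lra.
      assert (Htp : 0 < tau).
      { destruct (Req_dec tau 0) as [E|E]; [rewrite E in Hgz; lra| lra]. }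
      split; [exact Hgz|].
      apply (exit_lemma P beta K z0 T A tau ltac:(lra) Hb HK Hsol Htp Hdomt Hgz).
      intros s Hs. apply (Hbefore s Hs).
    + right. split.
      * fold (u tau). lra.
      * fold c. unfold u in Hu.
        replace (snd (A tau) - P * c / beta) with ((g tau + P * (u tau - c)) / beta) by (unfold g, u; field; lra).
        unfold Rdiv. rewrite Rabs_mult, (Rabs_right (/ beta)) by (left; apply Rinv_0_lt_compat; lra).
        assert (Rabs (g tau + P * (u tau - c)) <= (P + 1) * dl).
        { eapply Rle_trans. apply Rabs_triang. rewrite Rabs_mult, (Rabs_right P) by lra.
          rewrite Rabs_right by lra. unfold u. nra. }
        assert ((P + 1) * dl <= delta * beta / 2).
        { apply Rle_trans with ((P + 1) * (delta * beta / (2 * (P + 1)))).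
          - apply Rmult_le_compat_l; lra.
          - right. field. lra. }
        assert (Rabs (g tau + P * (u tau - c)) * / beta <= delta * beta / 2 * / beta).
        { apply Rmult_le_compat_r; [left; apply Rinv_0_lt_compat; lra| lra]. }
        assert (delta * beta / 2 * / beta = delta / 2) by (field; lra). lra.
  -
    exfalso.
    assert (Hgood : forall t, in_dom T t -> t <= 1 + Tend -> goodz P beta c dl (A t)).
    { intros t Ht Htt. apply NNPP. intro Hn. apply Hno. exists t. auto. }
    destruct (cont3 _ z0 T A P beta 0 ltac:(lra) Hb Hsol Hdom0 1 ltac:(lra)) as [d0 [Hd0 Hs0]].
    set (bT := match T with Some b => b / 2 | None => 1 end).
    assert (HbT : 0 < bT) by (unfold bT; destruct T as [b|]; [destruct Hsol; lra| lra]).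
    set (s0 := Rmin (Rmin 1 (d0 / 2)) bT).
    assert (Hs0a : s0 <= 1) by (unfold s0; apply Rle_trans with (Rmin 1 (d0/2)); [apply Rmin_l| apply Rmin_l]).
    assert (Hs0b : s0 <= d0 / 2) by (unfold s0; apply Rle_trans with (Rmin 1 (d0/2)); [apply Rmin_l| apply Rmin_r]).
    assert (Hs0c : s0 <= bT) by (unfold s0; apply Rmin_r).
    assert (Hs0p : 0 < s0) by (unfold s0; repeat apply Rmin_pos; lra).
    assert (Hdoms0 : in_dom T s0).
    { split; [lra|]. unfold bT in Hs0c. destruct T as [b|]; [destruct Hsol; lra| exact I]. }
    destruct (Hs0 s0 Hdoms0 ltac:(rewrite Rminus_0_r, Rabs_right; lra)) as [Hb1 [Hb2 _]].
    rewrite HA0 in Hb1, Hb2.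
    assert (HuS : Rabs (u s0) <= M1).
    { unfold u, M1. pose proof (Rabs_triang_inv (fst (A s0)) (fst z0)). lra. }
    assert (HvS : Rabs (snd (A s0)) <= M1).
    { unfold M1. pose proof (Rabs_triang_inv (snd (A s0)) (snd z0)). lra. }
    assert (HgS : g s0 <= G1).
    { unfold g, G1. apply abs_le_inv in HuS. apply abs_le_inv in HvS. unfold u in HuS. nra. }
    assert (Hder : forall S, (forall t, s0 <= t <= S -> in_dom T t) ->
       forall t, s0 <= t <= S -> derivable_pt_lim u t (g t) /\ derivable_pt_lim g t (gdot P beta K c (u t) (g t))).
    { intros S HS t Ht. destruct (sol_derivs P beta K z0 T A t ltac:(lra) Hsol ltac:(lra) (HS t Ht)) as [D1 [D2 _]].
      split; [exact D1| exact D2]. }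
    assert (Hgd : forall S, S <= 1 + Tend -> (forall t, s0 <= t <= S -> in_dom T t) ->
       forall t, s0 <= t <= S -> 0 < g t /\ ~ (Rabs (u t - c) < dl /\ g t < dl)).
    { intros S HS1 HS t Ht. apply (Hgood t (HS t Ht)). lra. }
    destruct (classic (forall t, s0 <= t <= s0 + Tend -> in_dom T t)) as [Hall|Hnall].
    + apply (phase_contra P beta K c dl M1 G1 u g s0 (s0 + Tend) ltac:(lra) Hb HK Hc Hdl ltac:(unfold M1; lra)
             (Hder (s0 + Tend) Hall) (Hgd (s0 + Tend) ltac:(lra) Hall) HuS HgS ltac:(lra)).
      fold C a T1 Gb2. unfold Tend. lra.
    +
      destruct T as [b|]; [| apply Hnall; intros t Ht; split; [lra| exact I]].
      assert (Hbs : b <= s0 + Tend).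
      { destruct (Rle_lt_dec b (s0 + Tend)) as [ok|Hgt]; [exact ok|].
        exfalso. apply Hnall. intros t Ht. split; lra. }
      assert (Hs0bb : s0 < b) by (destruct Hdoms0; lra).
      apply (no_bounded_max (cfG P beta K) (Gf P beta K) z0 b A Dx s0 (Gf_vf P beta K)).
      * unfold Dx. assert (0 <= M1 + Gx * Tend) by (unfold M1; nra).
        assert (0 <= (Gx + P * (M1 + Gx * Tend)) / beta) by (apply Rdiv_le_0_compat; nra). lra.
      * lra.
      * exact Hmax.
      * intros t Ht.
        assert (HS : forall x, s0 <= x <= t -> in_dom (Some b) x) by (intros x Hx; split; lra).
        assert (Hgx : forall x, s0 <= x <= t -> g x <= Gx).
        { intros x Hx.
          pose proof (g_upper P beta K c M1 G1 u g s0 t ltac:(lra) Hb HK ltac:(unfold M1; lra)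
              (Hder t HS) (fun y Hy => proj1 (Hgd t ltac:(lra) HS y Hy)) HuS HgS x Hx) as Hup.
          unfold Gx. fold L in Hup.
          assert (2 * beta * P * K * (c + M1) * (x - s0) <= 2 * beta * P * K * (c + M1) * Tend).
          { apply Rmult_le_compat_l; [| lra]. repeat apply Rmult_le_pos; unfold M1; lra. }
          lra. }
        assert (Hgp : forall x, s0 <= x <= t -> 0 < g x) by (intros x Hx; apply (Hgd t ltac:(lra) HS x Hx)).
        assert (Hmon := mono_u u g s0 t (fun y Hy => proj1 (Hder t HS y Hy)) Hgp).
        assert (Hut1 : u s0 <= u t) by (apply Hmon; lra).
        assert (Hut2 : u t - u s0 <= Gx * (t - s0)).
        { apply (ML_le u g s0 t Gx); [lra| intros y Hy; apply (Hder t HS y Hy)| exact Hgx]. }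
        assert (Gx * (t - s0) <= Gx * Tend) by (apply Rmult_le_compat_l; lra).
        apply abs_le_inv in HuS.
        assert (Hut : Rabs (u t) <= M1 + Gx * Tend) by (apply abs_le_intro; split; nra).
        assert (Hgt : 0 < g t <= Gx) by (split; [apply Hgp| apply Hgx]; lra).
        split.
        -- fold (u t). unfold Dx. assert (0 <= (Gx + P * (M1 + Gx * Tend)) / beta) by (apply Rdiv_le_0_compat; nra). lra.
        -- replace (snd (A t)) with ((g t + P * u t) / beta) by (unfold g, u; field; lra).
           unfold Rdiv. rewrite Rabs_mult, (Rabs_right (/ beta)) by (left; apply Rinv_0_lt_compat; lra).
           assert (Rabs (g t + P * u t) <= Gx + P * (M1 + Gx * Tend)).
           { eapply Rle_trans. apply Rabs_triang. rewrite Rabs_mult, (Rabs_right P) by lra.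
             rewrite (Rabs_right (g t)) by lra. nra. }
           assert (Rabs (g t + P * u t) * / beta <= (Gx + P * (M1 + Gx * Tend)) * / beta).
           { apply Rmult_le_compat_r; [left; apply Rinv_0_lt_compat; lra| lra]. }
           unfold Dx. unfold Rdiv in *. assert (0 <= M1 + Gx * Tend) by (unfold M1; nra). lra.
Qed.

Lemma F2_pos (P beta K u v U1 : R) : 3 <= P -> 0 < beta -> 0 < K -> Rabs u <= U1 ->
  Rabs v < P * (P - 1) / (beta * (K + P * U1)) -> 0 < snd (Gf P beta K u v).
Proof.
  intros HP Hb HK Hu Hv. unfold Gf; cbn [snd].
  assert (HU1 : 0 <= U1) by (pose proof (Rabs_pos u); lra).
  assert (Hden : 0 < beta * (K + P * U1)) by (apply Rmult_lt_0_compat; nra).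
  assert (Hbv : beta * (K + P * U1) * Rabs v < P * (P - 1)).
  { apply Rmult_lt_compat_l with (r := beta * (K + P * U1)) in Hv; [|exact Hden].
    replace (beta * (K + P * U1) * (P * (P - 1) / (beta * (K + P * U1)))) with (P * (P - 1)) in Hv by (assert (0 < K + P * U1) by nra; field; split; lra). lra. }
  assert (H1 : v <= Rabs v) by apply Rle_abs.
  assert (H2 : u * v <= Rabs u * Rabs v) by (rewrite <- Rabs_mult; apply Rle_abs).
  assert (H3 : Rabs u * Rabs v <= U1 * Rabs v) by (apply Rmult_le_compat_r; [apply Rabs_pos| exact Hu]).
  assert (0 <= P ^ 2 * u ^ 2) by (apply Rmult_le_pos; apply pow2_ge_0).
  assert (K * beta * v <= K * beta * Rabs v).
  { apply Rmult_le_compat_l; nra. }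
  assert (P * beta * u * v <= P * beta * (U1 * Rabs v)).
  { rewrite Rmult_assoc. apply Rmult_le_compat_l; nra. }
  replace (2 * P * (P - 1) - 2 * K * beta * v + 2 * P ^ 2 * u ^ 2 - 2 * P * beta * u * v)
    with (2 * (P * (P - 1)) + 2 * (- (K * beta * v)) + 2 * (P ^ 2 * u ^ 2) + 2 * (- (P * beta * u * v))) by ring.
  replace (beta * (K + P * U1) * Rabs v) with (K * beta * Rabs v + P * beta * (U1 * Rabs v)) in Hbv by ring.
  lra.
Qed.

Lemma P1gen (p : nat) (beta K : R) : (3 <= p)%nat -> 0 < beta -> 0 < K ->
  forall z0, Wplus p beta z0 -> forall T A, is_sol (Gf (INR p) beta K) z0 T A ->
  forall tau, is_glb (fun t => in_dom T t /\ ~ Wplus p beta (A t)) tau -> (INR p - 1) / K <= fst (A tau).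
Proof.
  intros Hp Hb HK z0 HW T A Hsol tau Htau.
  set (P := INR p). assert (HP : 3 <= P) by (unfold P; replace 3 with (INR 3) by (simpl; ring); apply le_INR; exact Hp).
  pose proof Htau as [_ Hglb].
  destruct (glb_props _ _ Htau) as [[t1 [Ht1d Ht1b]] Hlb].
  assert (HA0 : A 0 = z0) by apply Hsol.
  assert (Htau0 : 0 <= tau) by (apply Hglb; intros t [[Ht _] _]; exact Ht).
  assert (Htau1 : tau <= t1) by (apply Hlb; split; assumption).
  assert (Hdomt : in_dom T tau).
  { split; [exact Htau0|]. destruct T as [b|]; [destruct Ht1d; lra| exact I]. }
  assert (Hbefore : forall s, 0 <= s < tau -> in_dom T s /\ Wplus p beta (A s)).
  { intros s Hs. assert (Hsd : in_dom T s).
    { split; [lra|]. destruct T as [b|]; [destruct Hdomt; lra| exact I]. }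
    split; [exact Hsd|]. apply NNPP. intro Hn. assert (tau <= s) by (apply Hlb; split; assumption). lra. }
  set (u := fun s => fst (A s)). set (v := fun s => snd (A s)).
  set (g := fun s => - P * fst (A s) + beta * snd (A s)).
  assert (HWg : forall s, Wplus p beta (A s) -> 0 < g s /\ 0 <= v s).
  { intros s [H1 H2]. unfold F1 in H2. fold P in H2. unfold g, v. split; lra. }
  assert (HWz : 0 < g 0 /\ 0 <= v 0) by (apply HWg; rewrite HA0; exact HW).
  assert (Hnn : 0 <= g tau /\ 0 <= v tau).
  { destruct (Req_dec tau 0) as [E|E]; [rewrite E; lra|].
    split.
    - destruct (Rle_lt_dec 0 (g tau)) as [ok|Hneg]; [exact ok| exfalso].
      destruct (cont3 _ z0 T A P beta tau ltac:(lra) Hb Hsol Hdomt (- g tau) ltac:(lra)) as [d [Hd Hs]].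
      set (s := Rmax 0 (tau - d / 2)).
      assert (0 <= s) by apply Rmax_l. assert (tau - d / 2 <= s) by apply Rmax_r.
      assert (s < tau) by (unfold s; apply Rmax_lub_lt; lra).
      destruct (Hbefore s ltac:(lra)) as [Hsd HWs]. destruct (HWg s HWs) as [Hgs _].
      destruct (Hs s Hsd ltac:(apply Rabs_def1; lra)) as [_ [_ H3]].
      apply Rabs_def2 in H3. unfold g in *. lra.
    - destruct (Rle_lt_dec 0 (v tau)) as [ok|Hneg]; [exact ok| exfalso].
      destruct (cont3 _ z0 T A P beta tau ltac:(lra) Hb Hsol Hdomt (- v tau) ltac:(lra)) as [d [Hd Hs]].
      set (s := Rmax 0 (tau - d / 2)).
      assert (0 <= s) by apply Rmax_l. assert (tau - d / 2 <= s) by apply Rmax_r.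
      assert (s < tau) by (unfold s; apply Rmax_lub_lt; lra).
      destruct (Hbefore s ltac:(lra)) as [Hsd HWs]. destruct (HWg s HWs) as [_ Hvs].
      destruct (Hs s Hsd ltac:(apply Rabs_def1; lra)) as [_ [H2 _]].
      apply Rabs_def2 in H2. unfold v in *. lra. }
  assert (Hg0 : g tau = 0).
  { destruct (Req_dec (g tau) 0) as [E|Hne]; [exact E| exfalso].
    assert (Hgp : 0 < g tau) by lra.
    assert (Hnear : exists d, 0 < d /\ forall s, in_dom T s -> tau <= s < tau + d -> Wplus p beta (A s)).
    { destruct (Req_dec (v tau) 0) as [Hv0|Hvne].
      -
        set (U1 := Rabs (u tau) + 1).
        set (eta := P * (P - 1) / (beta * (K + P * U1))).
        assert (Heta : 0 < eta).
        { unfold eta. apply Rdiv_lt_0_compat; [nra|]. apply Rmult_lt_0_compat; [lra|].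
          unfold U1. pose proof (Rabs_pos (u tau)). nra. }
        set (eps := Rmin (g tau) (Rmin 1 eta)).
        assert (Heps : 0 < eps) by (unfold eps; repeat apply Rmin_pos; lra).
        assert (He1 : eps <= g tau) by apply Rmin_l.
        assert (He2 : eps <= 1) by (apply Rle_trans with (Rmin 1 eta); [apply Rmin_r| apply Rmin_l]).
        assert (He3 : eps <= eta) by (apply Rle_trans with (Rmin 1 eta); [apply Rmin_r| apply Rmin_r]).
        destruct (cont3 _ z0 T A P beta tau ltac:(lra) Hb Hsol Hdomt eps Heps) as [d [Hd Hs]].
        assert (Hloc : forall s, in_dom T s -> Rabs (s - tau) < d -> 0 < g s /\ 0 < snd (Gf P beta K (u s) (v s))).
        { intros s Hsd Hst. destruct (Hs s Hsd Hst) as [H1 [H2 H3]].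
          apply Rabs_def2 in H3. split; [unfold g in *; lra|].
          apply (F2_pos P beta K (u s) (v s) U1 HP Hb HK).
          - unfold U1. pose proof (Rabs_triang_inv (fst (A s)) (fst (A tau))). unfold u. lra.
          - fold eta. unfold v. rewrite <- (Rminus_0_r (snd (A s))). fold (v tau). rewrite <- Hv0.
            unfold v. lra. }
        exists d. split; [exact Hd|]. intros s Hsd [Hs1 Hs2].
        assert (Hgs : 0 < g s) by (apply (Hloc s Hsd); apply Rabs_def1; lra).
        assert (Hvs : 0 <= v s).
        { destruct (Req_dec s tau) as [E|E]; [rewrite E; lra|].
          destruct (Rle_lt_dec 0 (v s)) as [ok|Hneg]; [exact ok| exfalso].
          destruct (cont3 _ z0 T A P beta tau ltac:(lra) Hb Hsol Hdomt (- v s) ltac:(lra)) as [d2 [Hd2 Hs2']].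
          set (s' := tau + Rmin d2 (s - tau) / 2).
          assert (Hm1 : 0 < Rmin d2 (s - tau)) by (apply Rmin_pos; lra).
          assert (Hm2 : Rmin d2 (s - tau) <= d2) by apply Rmin_l.
          assert (Hm3 : Rmin d2 (s - tau) <= s - tau) by apply Rmin_r.
          assert (Hs'd : in_dom T s').
          { split; [unfold s'; lra|]. destruct T as [b|]; [destruct Hsd; unfold s'; lra| exact I]. }
          destruct (Hs2' s' Hs'd ltac:(unfold s'; apply Rabs_def1; lra)) as [_ [Hv' _]].
          apply Rabs_def2 in Hv'. fold (v s') in Hv'. fold (v tau) in Hv'. rewrite Hv0 in Hv'.
          assert (Hmon : 0 * (s - s') <= v s - v s').
          { apply (ML v (fun x => snd (Gf P beta K (u x) (v x))) s' s 0).
            - unfold s'; lra.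
            - intros x Hx. assert (Hxd : in_dom T x).
              { split; [unfold s' in Hx; lra|]. destruct T as [b|]; [destruct Hsd; lra| exact I]. }
              destruct (sol_derivs P beta K z0 T A x ltac:(lra) Hsol ltac:(unfold s' in Hx; lra) Hxd) as [_ [_ D3]].
              exact D3.
            - intros x Hx. assert (Hxd : in_dom T x).
              { split; [unfold s' in Hx; lra|]. destruct T as [b|]; [destruct Hsd; lra| exact I]. }
              left. apply (Hloc x Hxd). apply Rabs_def1; unfold s' in Hx; lra. }
          lra. }
        unfold Wplus, F1. fold P. unfold g, v in *. split; lra.
      -
        assert (Hvp : 0 < v tau) by lra.
        set (eps := Rmin (g tau) (v tau)).
        assert (Heps : 0 < eps) by (unfold eps; apply Rmin_pos; lra).
        assert (He1 : eps <= g tau) by apply Rmin_l. assert (He2 : eps <= v tau) by apply Rmin_r.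
        destruct (cont3 _ z0 T A P beta tau ltac:(lra) Hb Hsol Hdomt eps Heps) as [d [Hd Hs]].
        exists d. split; [exact Hd|]. intros s Hsd [Hs1 Hs2].
        destruct (Hs s Hsd ltac:(apply Rabs_def1; lra)) as [_ [H2 H3]].
        apply Rabs_def2 in H2. apply Rabs_def2 in H3.
        unfold Wplus, F1. fold P. unfold g, v in *. split; lra. }
    destruct Hnear as [d [Hd Hnear]].
    assert (tau + d <= tau); [|lra].
    apply Hglb. intros t [Htd Htb].
    destruct (Rlt_le_dec t (tau + d)) as [Hl|Hl]; [|exact Hl].
    exfalso. apply Htb. apply Hnear; [exact Htd|]. split; [apply Hlb; split; assumption| exact Hl]. }
  assert (Htp : 0 < tau).
  { destruct (Req_dec tau 0) as [E|E]; [rewrite E in Hg0; lra| lra]. }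
  apply (exit_lemma P beta K z0 T A tau ltac:(lra) Hb HK Hsol Htp Hdomt Hg0).
  intros s Hs. destruct (Hbefore s Hs) as [_ HWs]. apply (HWg s HWs).
Qed.

Lemma INR_ge3 p : (3 <= p)%nat -> 3 <= INR p.
Proof. intro Hp. replace 3 with (INR 3) by (simpl; ring). apply le_INR; exact Hp. Qed.

Lemma uc_eq p beta Lam : (3 <= p)%nat -> 0 < beta -> 0 < Lam ->
  uc p beta Lam = (INR p - 1) / ((INR p - 1) / beta + Lam).
Proof.
  intros Hp Hb HL. pose proof (INR_ge3 p Hp). unfold uc.
  assert (0 < INR p - 1 + beta * Lam) by nra.
  field. repeat split; try lra.
Qed.

Lemma ubarc_eq p beta Lam : (3 <= p)%nat -> 0 < beta -> 0 < Lam -> ubarc_finite p beta Lam ->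
  ubarc p beta Lam = (INR p - 1) / ((INR p - 1) / beta - Lam).
Proof.
  intros Hp Hb HL Hf. pose proof (INR_ge3 p Hp). unfold ubarc_finite in Hf. unfold ubarc.
  field. repeat split; try lra.
Qed.

Lemma uc_pos p beta Lam : (3 <= p)%nat -> 0 < beta -> 0 < Lam -> 0 < uc p beta Lam.
Proof.
  intros Hp Hb HL. pose proof (INR_ge3 p Hp). rewrite uc_eq by assumption.
  apply Rdiv_lt_0_compat; [lra|]. assert (0 < (INR p - 1) / beta) by (apply Rdiv_lt_0_compat; lra). lra.
Qed.

Lemma uc_le_ubarc p beta Lam : (3 <= p)%nat -> 0 < beta -> 0 < Lam -> ubarc_finite p beta Lam ->
  uc p beta Lam <= ubarc p beta Lam.
Proof.
  intros Hp Hb HL Hf. pose proof (INR_ge3 p Hp). unfold ubarc_finite in Hf. unfold uc, ubarc.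
  assert (0 < beta * Lam / (INR p - 1)) by (apply Rdiv_lt_0_compat; nra).
  assert (beta * Lam / (INR p - 1) < 1).
  { apply (Rmult_lt_reg_r (INR p - 1)); [lra|]. unfold Rdiv. rewrite Rmult_assoc, Rinv_l by lra. lra. }
  apply Rmult_le_compat_l; [lra|]. apply Rinv_le_contravar; lra.
Qed.

Lemma key_ineq p beta Lam u : (3 <= p)%nat -> 0 < beta -> 0 < Lam -> uc p beta Lam <= u ->
  beta * (INR p - 1) <= u * (INR p - 1 + beta * Lam).
Proof.
  intros Hp Hb HL Hu. pose proof (INR_ge3 p Hp).
  assert (E : uc p beta Lam * (INR p - 1 + beta * Lam) = beta * (INR p - 1)).
  { unfold uc. field. split; nra. }
  assert (0 < INR p - 1 + beta * Lam) by nra.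
  rewrite <- E. apply Rmult_le_compat_r; lra.
Qed.

Lemma exit_target p beta Lam delta z : (3 <= p)%nat -> 0 < beta -> 0 < Lam ->
  - INR p * fst z + beta * snd z = 0 -> uc p beta Lam <= fst z -> target p beta Lam delta z.
Proof.
  intros Hp Hb HL Hg Hu. pose proof (INR_ge3 p Hp). pose proof (uc_pos p beta Lam Hp Hb HL).
  set (P := INR p) in *. set (u := fst z) in *.
  assert (Hv : snd z = P * u / beta) by (field_simplify_eq; [lra| lra]).
  destruct (classic (A0 p beta Lam z)) as [HA|HA]; [left; left; exact HA| right].
  pose proof (key_ineq p beta Lam u Hp Hb HL Hu) as Hk. fold P in Hk.
  assert (Hden : 0 < fL_den p beta Lam u).
  { unfold fL_den. fold P. assert (0 < P * beta * u) by (repeat apply Rmult_lt_0_compat; lra). nra. }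
  unfold A1. split; [|split; [exact Hden| split; [split|exact HA]]].
  - rewrite Hv. apply Rdiv_le_0_compat; [|lra]. apply Rmult_le_pos; lra.
  - rewrite Hv. unfold fL. fold P. fold u.
    apply Rmult_le_reg_r with (fL_den p beta Lam u); [exact Hden|].
    unfold Rdiv at 1. rewrite Rmult_assoc, Rinv_l by lra. rewrite Rmult_1_r.
    unfold fL_den. fold P.
    apply Rmult_le_reg_r with beta; [exact Hb|].
    replace (P * u / beta * (P - 1 + P * beta * u + beta * Lam) * beta)
      with (P * (u * (P - 1 + beta * Lam)) + P * P * beta * u * u) by (field; lra).
    assert (P * (beta * (P - 1)) <= P * (u * (P - 1 + beta * Lam))) by (apply Rmult_le_compat_l; lra).
    nra.
  - rewrite Hv. unfold l1. fold P u. lra.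
Qed.

Lemma fL_uc p beta Lam : (3 <= p)%nat -> 0 < beta -> 0 < Lam ->
  fL p beta Lam (uc p beta Lam) = INR p * uc p beta Lam / beta.
Proof.
  intros Hp Hb HL. pose proof (INR_ge3 p Hp). pose proof (uc_pos p beta Lam Hp Hb HL).
  assert (E : uc p beta Lam * (INR p - 1 + beta * Lam) = beta * (INR p - 1)).
  { unfold uc. field. split; nra. }
  set (c := uc p beta Lam) in *. set (P := INR p) in *.
  unfold fL, fL_den. fold P c.
  assert (0 < P * beta * c) by (apply Rmult_lt_0_compat; [apply Rmult_lt_0_compat|]; lra).
  assert (Hd : 0 < P - 1 + P * beta * c + beta * Lam) by nra.
  apply Rmult_eq_reg_r with ((P - 1 + P * beta * c + beta * Lam) * beta); [| nra].
  unfold Rdiv. field_simplify; [| lra | lra].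
  assert (E' : P * c * (P - 1 + beta * Lam) = P * (beta * (P - 1))) by (rewrite Rmult_assoc, E; ring).
  lra.
Qed.

Lemma fU_ubarc p beta Lam : (3 <= p)%nat -> 0 < beta -> 0 < Lam -> ubarc_finite p beta Lam ->
  fU p beta Lam (ubarc p beta Lam) = INR p * ubarc p beta Lam / beta.
Proof.
  intros Hp Hb HL Hf. pose proof (INR_ge3 p Hp). pose proof (uc_pos p beta Lam Hp Hb HL).
  pose proof (uc_le_ubarc p beta Lam Hp Hb HL Hf). unfold ubarc_finite in Hf.
  assert (E : ubarc p beta Lam * (INR p - 1 - beta * Lam) = beta * (INR p - 1)).
  { unfold ubarc. field. split; [lra|]. intro. assert (beta * Lam = INR p - 1).
    { apply (Rmult_eq_reg_r (/ (INR p - 1))); [| apply Rinv_neq_0_compat; lra].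
      rewrite Rinv_r by lra. unfold Rdiv in H2. lra. }
    lra. }
  set (c := ubarc p beta Lam) in *. set (P := INR p) in *.
  unfold fU, fU_den. fold P c.
  assert (0 < P * beta * c) by (apply Rmult_lt_0_compat; [apply Rmult_lt_0_compat|]; lra).
  assert (Hd : 0 < P - 1 + P * beta * c - beta * Lam) by nra.
  apply Rmult_eq_reg_r with ((P - 1 + P * beta * c - beta * Lam) * beta); [| nra].
  unfold Rdiv. field_simplify; [| lra | lra].
  assert (E' : P * c * (P - 1 - beta * Lam) = P * (beta * (P - 1))) by (rewrite Rmult_assoc, E; ring).
  lra.
Qed.

Lemma fin_glb (T : option R) (A : R -> R * R) (Q : R * R -> Prop) t T0 :
  in_dom T t -> Q (A t) -> t <= T0 ->
  exists tau, is_glb (fun s => in_dom T s /\ Q (A s)) tau /\ tau <= T0.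
Proof.
  intros Ht HQ HT0.
  destruct (glb_exists (fun s => in_dom T s /\ Q (A s)) ltac:(exists t; split; assumption)
             ltac:(intros s [[Hs _] _]; exact Hs)) as [m Hm].
  exists m. split; [exact Hm|]. destruct Hm as [Hlb _].
  assert (m <= t) by (apply Hlb; split; assumption). lra.
Qed.

Theorem mainTheorem19 (p : nat) (beta Lam : R) :
  (3 <= p)%nat -> 0 < beta -> 0 < Lam ->
  (* (1) *)
  (forall x0 y0 : R, Wplus p beta (x0, y0) ->
     (forall T A, is_max_sol (FL p beta Lam) (x0, y0) T A ->
        forall tau, is_glb (fun t => in_dom T t /\ ~ Wplus p beta (A t)) tau ->
        uc p beta Lam <= fst (A tau)) /\
     (ubarc_finite p beta Lam ->
      forall T A, is_max_sol (FU p beta Lam) (x0, y0) T A ->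
        forall tau, is_glb (fun t => in_dom T t /\ ~ Wplus p beta (A t)) tau ->
        ubarc p beta Lam <= fst (A tau))) /\
  (* (2) *)
  (forall B : R * R -> Prop,
     (forall z, B z -> 0 <= snd z) ->
     (exists M, forall z, B z -> Rabs (fst z) <= M /\ Rabs (snd z) <= M) ->
     forall delta, 0 < delta ->
     exists T0 : R, forall x0 y0 : R, B (x0, y0) -> Wplus p beta (x0, y0) ->
       (forall T A, is_max_sol (FL p beta Lam) (x0, y0) T A ->
          exists tau, is_glb (fun t => in_dom T t /\
                                target p beta Lam delta (A t)) tau /\ tau <= T0) /\
       (ubarc_finite p beta Lam ->
        forall T A, is_max_sol (FU p beta Lam) (x0, y0) T A ->
          exists tau, is_glb (fun t => in_dom T t /\
                                target p beta Lam delta (A t)) tau /\ tau <= T0)).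
Proof.
  intros Hp Hb HL.
  pose proof (INR_ge3 p Hp) as HP.
  set (KL := (INR p - 1) / beta + Lam).
  set (KU := (INR p - 1) / beta - Lam).
  assert (HKL : 0 < KL) by (unfold KL; assert (0 < (INR p - 1) / beta) by (apply Rdiv_lt_0_compat; lra); lra).
  assert (HKU : ubarc_finite p beta Lam -> 0 < KU).
  { intro Hf. unfold ubarc_finite in Hf. unfold KU.
    assert (beta * Lam / beta < (INR p - 1) / beta) by (apply Rmult_lt_compat_r; [apply Rinv_0_lt_compat|]; lra).
    replace (beta * Lam / beta) with Lam in H by (field; lra). lra. }
  assert (Huc : uc p beta Lam = (INR p - 1) / KL) by (apply uc_eq; assumption).
  assert (Hub : ubarc_finite p beta Lam -> ubarc p beta Lam = (INR p - 1) / KU) by (intro; apply ubarc_eq; assumption).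
  split.
  - intros x0 y0 HW. split.
    + intros T A Hmax tau Htau. rewrite Huc.
      rewrite (FL_Gf p beta Lam ltac:(lra)) in Hmax. fold KL in Hmax.
      exact (P1gen p beta KL Hp Hb HKL (x0, y0) HW T A (proj1 Hmax) tau Htau).
    + intros Hf T A Hmax tau Htau. rewrite (Hub Hf).
      rewrite (FU_Gf p beta Lam ltac:(lra)) in Hmax. fold KU in Hmax.
      exact (P1gen p beta KU Hp Hb (HKU Hf) (x0, y0) HW T A (proj1 Hmax) tau Htau).
  - intros B HB0 [M HM] delta Hdel.
    set (Mp := Rabs M).
    assert (HBM : forall z, B z -> Rabs (fst z) <= Mp /\ Rabs (snd z) <= Mp).
    { intros z Hz. destruct (HM z Hz). pose proof (Rle_abs M). unfold Mp. lra. }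
    destruct (P2gen p beta KL delta Mp Hp Hb HKL Hdel (Rabs_pos M)) as [TL HTL].
    assert (HLpart : forall T0, TL <= T0 -> forall x0 y0, B (x0, y0) -> Wplus p beta (x0, y0) ->
       forall T A, is_max_sol (FL p beta Lam) (x0, y0) T A ->
          exists tau, is_glb (fun t => in_dom T t /\ target p beta Lam delta (A t)) tau /\ tau <= T0).
    { intros T0 HT0 x0 y0 HBz HW T A Hmax.
      rewrite (FL_Gf p beta Lam ltac:(lra)) in Hmax. fold KL in Hmax.
      destruct (HBM _ HBz) as [Hu0 Hv0].
      destruct (HTL (x0, y0) Hu0 Hv0 HW T A Hmax) as [t [Htd [HtT Hcase]]].
      apply (fin_glb T A _ t T0 Htd); [| lra].
      rewrite <- Huc in Hcase. destruct Hcase as [[Hg Hu]|[Hu Hv]].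
      - apply exit_target; assumption.
      - left. right. left. unfold ballinf, zc. simpl. rewrite fL_uc by assumption. split; assumption. }
    destruct (classic (ubarc_finite p beta Lam)) as [Hf|Hnf].
    + destruct (P2gen p beta KU delta Mp Hp Hb (HKU Hf) Hdel (Rabs_pos M)) as [TU HTU].
      exists (Rmax TL TU). intros x0 y0 HBz HW. split.
      * apply (HLpart _ (Rmax_l TL TU) x0 y0 HBz HW).
      * intros _ T A Hmax.
        rewrite (FU_Gf p beta Lam ltac:(lra)) in Hmax. fold KU in Hmax.
        destruct (HBM _ HBz) as [Hu0 Hv0].
        destruct (HTU (x0, y0) Hu0 Hv0 HW T A Hmax) as [t [Htd [HtT Hcase]]].
        apply (fin_glb T A _ t (Rmax TL TU) Htd); [| pose proof (Rmax_r TL TU); lra].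
        rewrite <- (Hub Hf) in Hcase. destruct Hcase as [[Hg Hu]|[Hu Hv]].
        -- apply exit_target; try assumption.
           apply Rle_trans with (ubarc p beta Lam); [apply uc_le_ubarc; assumption| exact Hu].
        -- left. right. right. split; [exact Hf|].
           unfold ballinf, zbarc. simpl. rewrite fU_ubarc by assumption. split; assumption.
    + exists TL. intros x0 y0 HBz HW. split.
      * apply (HLpart _ (Rle_refl TL) x0 y0 HBz HW).
      * intro Hf. contradiction.
Qed.
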